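(* Let $K$ be a sequence of positive integers with $K_n=ab^n(1+o(1))$, where $a,b$ are positive reals with $\log_\phi b$ irrational. Then $\{\mathfrak F^{-1}(K_n)\}$ is equidistributed, and for every integer $s\ge2$ and $\mathbf b\in\mathcal F_s$, $$\lim_{n\to\infty}\frac{\#\{k\le n:\mathrm{LB}_s(K_k)=\mathbf b\}}{n}=\log_\phi\frac{\widetilde{\mathbf b}\cdot\widehat F}{\mathbf b\cdot\widehat F}.$$
   Context: $F$: $F_1=1,F_2=2,F_{n+2}=F_{n+1}+F_n$. Zeckendorf expansion $m=\sum_{k=1}^M\epsilon(k)F_{M-k+1}$ (unique, $\epsilon(k)\in\{0,1\}$, $\epsilon(1)=1$, $\epsilon(k)\epsilon(k+1)=0$); $\mathrm{LB}_s(m)=(\epsilon(1),\dots,\epsilon(s))$ if $M\ge s$. $\mathcal F_s$: all $\mathrm{LB}_s(m)$, listed $\mathbf b_1,\dots,\mathbf b_\ell$ with $1+\mathbf b_k*F=\mathbf b_{k+1}*F$, $\mathbf b*F=\sum_k\mathbf b(k)F_{s-k+1}$; $\mathbf b_{\ell+1}:=(1,0,1,0,\dots,1,0,1,1)$ if $s$ even, $(1,0,1,0,\dots,1,1,0)$ if $s$ odd; $\widetilde{\mathbf b_k}=\mathbf b_{k+1}$. $\omega=\phi^{-1}$, $\mathbf b\cdot\widehat F=\sum_k\mathbf b(k)\omega^{k-1}$. $\mathfrak F(x)=\frac{\phi}{\sqrt5}(\phi^x+\phi^{-x}\cos(\pi x)\phi^{-2})$, increasing on $[1,\infty)$ with inverse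 $\mathfrak F^{-1}$. $\{x_n\}$ equidistributed means $\lim_n\#\{k\le n:\{x_k\}\le\beta\}/n=\beta$ for all $\beta\in[0,1]$. *)

(* Defs.v *)
From Stdlib Require Import Reals Lra Lia List QArith ClassicalEpsilon.
From Coquelicot Require Import Coquelicot.
Import ListNotations.
Open Scope R_scope.

(* Fibonacci numbers with F_1 = 1, F_2 = 2, F_{n+2} = F_{n+1} + F_n.
   (F_0 is never used; set to 1.) *)
Fixpoint fibF (n : nat) : nat :=
  match n with
  | O => 1
  | S O => 1
  | S (S O) => 2
  | S ((S (S _)) as m) => (fibF m + fibF (pred m))%nat
  end.

(* k-th entry of a 0/1 word, 1-based: b(k). *)
Definition bit (b : list bool) (k : nat) : nat :=
  if nth (k - 1) b false then 1%nat else 0%nat.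

Definition dotF (b : list bool) : nat :=
  fold_right Nat.add 0%nat
    (map (fun k => (bit b k * fibF (length b - k + 1))%nat) (seq 1 (length b))).

Definition no_consec (e : list bool) : Prop :=
  forall k, (1 <= k)%nat -> (k + 1 <= length e)%nat ->
    (bit e k * bit e (k + 1))%nat = 0%nat.

Definition zeck (m : nat) (e : list bool) : Prop :=
  (1 <= length e)%nat /\ bit e 1 = 1%nat /\ no_consec e /\ m = dotF e.

Definition LB (s m : nat) (b : list bool) : Prop :=
  exists e, zeck m e /\ (s <= length e)%nat /\ firstn s e = b.

Definition inFs (s : nat) (b : list bool) : Prop := exists m, LB s m b.

Fixpoint rep10 (j : nat) : list bool :=
  match j with O => [] | S j' => true :: false :: rep10 j' end.

Definition bspecial (s : nat) : list bool :=
  if Nat.even s then rep10 ((s - 2) / 2) ++ [true; true]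
  else rep10 ((s - 3) / 2) ++ [true; true; false].

Definition tilde (s : nat) (b : list bool) : list bool :=
  match excluded_middle_informative
          (exists c, inFs s c /\ dotF c = S (dotF b)) with
  | left H => proj1_sig (constructive_indefinite_description _ H)
  | right _ => bspecial s
  end.

Definition phi : R := (1 + sqrt 5) / 2.
Definition omega : R := / phi.

Definition dotHat (b : list bool) : R :=
  fold_right Rplus 0
    (map (fun k => INR (bit b k) * omega ^ (k - 1)) (seq 1 (length b))).

Definition logphi (x : R) : R := ln x / ln phi.

Definition frakF (x : R) : R :=
  phi / sqrt 5 * (Rpower phi x + Rpower phi (- x) * cos (PI * x) * Rpower phi (-2)).

(* Inverse of frakF restricted to [1, oo) (frakF is increasing there). *)
Definition frakFinv (y : R) : R :=
  epsilon (inhabits 0) (fun x => 1 <= x /\ frakF x = y).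

Definition ind (P : Prop) : R :=
  if excluded_middle_informative P then 1 else 0.

Fixpoint cnt (P : nat -> Prop) (n : nat) : R :=
  match n with O => 0 | S n' => cnt P n' + ind (P (S n)) end.

Definition equidistributed (x : nat -> R) : Prop :=
  forall beta, 0 <= beta <= 1 ->
    is_lim_seq (fun n => cnt (fun k => frac_part (x k) <= beta) n / INR n) beta.

(* Main.v *)
From Pilot Require Import Defs.
From Stdlib Require Import Reals Lra Lia List QArith ClassicalEpsilon ZArith Classical.
From Coquelicot Require Import Coquelicot.
Import ListNotations.
Open Scope R_scope.
Local Notation ind := Pilot.Defs.ind.

Lemma fib_rec n : fibF (S (S n)) = (fibF (S n) + fibF n)%nat.
Proof. destruct n; reflexivity. Qed.

Lemma fib_pos n : (1 <= fibF n)%nat.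
Proof.
  assert (H: forall n, (1 <= fibF n)%nat /\ (1 <= fibF (S n))%nat).
  { induction n0 as [|n0 [H1 H2]]. simpl; lia. split; auto. rewrite fib_rec; lia. }
  apply H.
Qed.

Lemma fib_mono n : (fibF n <= fibF (S n))%nat.
Proof. destruct n. simpl; lia. rewrite fib_rec. lia. Qed.

Lemma fib0 : fibF 0 = 1%nat. Proof. reflexivity. Qed.
Lemma fib1 : fibF 1 = 1%nat. Proof. reflexivity. Qed.
Arguments fibF : simpl never.

Fixpoint val (w : list bool) : nat :=
  match w with [] => 0%nat | x :: w' => ((if x then fibF (S (length w')) else 0) + val w')%nat end.

Fixpoint okw (w : list bool) : Prop :=
  match w with
  | [] => True
  | x :: w' => (match w' with [] => True | y :: _ => x = true -> y = false end) /\ okw w'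
  end.

Lemma bit_cons x w k : (1 <= k)%nat -> bit (x :: w) (S k) = bit w k.
Proof. intros Hk. unfold bit. replace (S k - 1)%nat with (S (k - 1)) by lia. reflexivity. Qed.

Lemma dotF_cons x w : dotF (x :: w) = ((if x then fibF (S (length w)) else 0) + dotF w)%nat.
Proof.
  unfold dotF. cbn [length]. cbn [seq]. rewrite <- (seq_shift (length w) 1). cbn [map fold_right].
  f_equal.
  - unfold bit. cbn -[fibF]. replace (length w - 0 + 1)%nat with (S (length w)) by lia.
    destruct x; lia.
  - rewrite map_map. f_equal. apply map_ext_in. intros k Hk. apply in_seq in Hk.
    rewrite bit_cons by lia. repeat f_equal.
Qed.

Lemma dotF_val w : dotF w = val w.
Proof.
  induction w as [|x w IH]. reflexivity.
  rewrite dotF_cons, IH. reflexivity.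
Qed.

Lemma no_consec_okw e : no_consec e <-> okw e.
Proof.
  unfold no_consec. induction e as [|x w IH].
  - simpl. split; auto. intros _ k Hk Hk2. simpl in Hk2. lia.
  - split.
    + intros H. simpl. split.
      * destruct w as [|y w']. auto. intros Hx.
        specialize (H 1%nat ltac:(lia) ltac:(simpl; lia)).
        unfold bit in H. simpl in H. subst x. destruct y; simpl in H; congruence.
      * apply IH. intros k Hk Hk2. specialize (H (S k) ltac:(lia) ltac:(simpl; lia)).
        rewrite bit_cons in H by lia. replace (S k + 1)%nat with (S (k+1)) in H by lia.
        rewrite bit_cons in H by lia. exact H.
    + intros [H1 H2] k Hk Hk2. destruct k as [|k]. lia.
      destruct k as [|k].
      * destruct w as [|y w']. simpl in Hk2; lia.
        unfold bit. simpl. destruct x; destruct y; auto. specialize (H1 eq_refl); discriminate.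
      * replace (S (S k) + 1)%nat with (S (S k + 1)) by lia.
        rewrite !bit_cons by lia. apply IH; auto; simpl in Hk2; lia.
Qed.

Definition hdf (w : list bool) := hd false w.

Lemma val_upper w : okw w -> (val w < fibF (S (length w)))%nat /\ (hdf w = false -> (val w < fibF (length w))%nat).
Proof.
  induction w as [|x w IH]; intros Hok.
  - simpl. rewrite fib0, fib1. split; lia.
  - destruct Hok as [H1 H2]. specialize (IH H2) as [IH1 IH2]. simpl.
    destruct x.
    + split; [|intros; discriminate].
      destruct w as [|y w'].
      * simpl. rewrite fib_rec, fib0, fib1. lia.
      * specialize (H1 eq_refl). subst y. specialize (IH2 eq_refl).
        rewrite fib_rec. simpl length in *. lia.
    + split.
      * rewrite fib_rec. pose proof (fib_pos (length w)). lia.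
      * intros _. lia.
Qed.

Lemma val_uniq w1 : forall w2, okw w1 -> okw w2 -> length w1 = length w2 -> val w1 = val w2 -> w1 = w2.
Proof.
  induction w1 as [|x1 w1 IH]; intros w2 H1 H2 Hl Hv.
  - destruct w2; simpl in Hl; congruence.
  - destruct w2 as [|x2 w2]; simpl in Hl; try congruence. injection Hl as Hl.
    destruct H1 as [_ H1]. destruct H2 as [_ H2].
    pose proof (val_upper w1 H1) as [U1 _]. pose proof (val_upper w2 H2) as [U2 _].
    simpl in Hv. rewrite Hl in *.
    destruct x1, x2.
    + f_equal. apply IH; auto. lia.
    + lia.
    + lia.
    + f_equal. apply IH; auto.
Qed.

Lemma okw_app_l p t : okw (p ++ t) -> okw p.
Proof.
  induction p as [|x p IH]; simpl; auto.
  intros [H1 H2]. split; auto. destruct p as [|y p]; auto.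
Qed.

Lemma okw_app p t : okw p -> okw t -> (last p false = true -> hdf t = false) -> okw (p ++ t).
Proof.
  induction p as [|x p IH]; intros Hp Ht Hl. simpl; auto.
  destruct Hp as [H1 H2]. destruct p as [|y p].
  - simpl in *. split; auto. destruct t as [|z t]; auto.
  - split. exact H1. apply IH; auto.
Qed.

Lemma okw_junction p y t : okw (p ++ y :: t) -> last p false = true -> y = false.
Proof.
  induction p as [|x p IH]; simpl. intros _ H; discriminate.
  intros [H1 H2] Hl. destruct p as [|z p].
  - simpl in *. subst. apply H1; auto.
  - apply IH; auto.
Qed.

Lemma okw_tail p t : okw (p ++ t) -> okw t.
Proof. induction p as [|x p IH]; simpl; auto. intros [_ H]; auto. Qed.

Lemma okw_zeros j : okw (repeat false j).
Proof. induction j; simpl; auto. split; auto. destruct j; simpl; auto. Qed.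

Lemma val_zeros j : val (repeat false j) = 0%nat.
Proof. induction j; simpl; auto. Qed.

Lemma val_app p t : val (p ++ t) = (val (p ++ repeat false (length t)) + val t)%nat.
Proof.
  induction p as [|x p IH]; simpl. rewrite val_zeros; lia.
  rewrite !length_app, repeat_length, IH. lia.
Qed.

Lemma rep_exists L : forall r, (r < fibF (S L))%nat ->
  exists t, okw t /\ length t = L /\ val t = r /\ ((r < fibF L)%nat -> hdf t = false).
Proof.
  induction L as [|L IH]; intros r Hr.
  - exists []. simpl in *. rewrite fib1 in Hr. rewrite fib0. repeat split; auto; lia.
  - destruct (Nat.le_gt_cases (fibF (S L)) r) as [Hle|Hlt].
    + rewrite fib_rec in Hr.
      destruct (IH (r - fibF (S L))%nat) as [t [H1 [H2 [H3 H4]]]].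
      { pose proof (fib_mono L). lia. }
      exists (true :: t). simpl. repeat split; auto.
      * destruct t as [|y t]; auto. intros _. apply H4. lia.
      * rewrite H2, H3. lia.
      * intros; lia.
    + destruct (IH r Hlt) as [t [H1 [H2 [H3 H4]]]].
      exists (false :: t). simpl. repeat split; auto.
      destruct t; auto; discriminate.
Qed.

Definition Lm (w : list bool) (j : nat) : nat :=
  if last w false then fibF j else fibF (S j).

Definition V (w : list bool) (j : nat) : nat := val (w ++ repeat false j).

Lemma I1 w t : okw (w ++ t) ->
  (V w (length t) <= val (w ++ t) < V w (length t) + Lm w (length t))%nat.
Proof.
  intros Hok. unfold V. pose proof (val_app w t) as E. rewrite E.
  assert (Ht : okw t) by (eapply okw_tail; eauto).
  pose proof (val_upper t Ht) as [U1 U2].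
  unfold Lm. destruct (last w false) eqn:El.
  - destruct t as [|y t]. simpl. rewrite fib0. simpl in *. lia.
    assert (y = false) by (eapply okw_junction; eauto). subst y.
    specialize (U2 eq_refl). lia.
  - lia.
Qed.

Lemma I2 w j r : okw w -> (r < Lm w j)%nat ->
  exists t, length t = j /\ okw (w ++ t) /\ val (w ++ t) = (V w j + r)%nat.
Proof.
  intros Hw Hr. unfold Lm in Hr. destruct (last w false) eqn:El.
  - destruct j as [|j].
    + exists []. rewrite fib0 in Hr. assert (r = 0%nat) by lia. subst. rewrite app_nil_r.
      unfold V. simpl. rewrite app_nil_r. repeat split; auto. lia.
    + destruct (rep_exists j r Hr) as [t [H1 [H2 [H3 _]]]].
      exists (false :: t). repeat split.
      * simpl; auto.
      * apply okw_app; auto. simpl. split; auto. destruct t; auto; discriminate.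
      * rewrite val_app. simpl length. unfold V. rewrite H2. simpl. lia.
  - destruct (rep_exists j r Hr) as [t [H1 [H2 [H3 _]]]].
    exists t. repeat split; auto.
    + apply okw_app; auto. intros Hc; congruence.
    + rewrite val_app. unfold V. rewrite H2, H3. lia.
Qed.

Lemma mono p : forall c t1 t2, okw (p ++ t1) -> okw (c ++ t2) -> length p = length c ->
  length t1 = length t2 -> (val p < val c)%nat -> (val (p ++ t1) < val (c ++ t2))%nat.
Proof.
  induction p as [|x p IH]; intros c t1 t2 H1 H2 Hl Ht Hv.
  - destruct c; simpl in Hl; try discriminate. simpl in Hv; lia.
  - destruct c as [|y c]; simpl in Hl; try congruence. injection Hl as Hl.
    simpl in H1, H2. destruct H1 as [_ H1]. destruct H2 as [_ H2].
    pose proof (val_upper _ (okw_app_l _ _ H1)) as [Up _].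
    pose proof (val_upper _ (okw_app_l _ _ H2)) as [Uc _].
    pose proof (val_upper _ H1) as [Upt _].
    simpl in Hv |- *. rewrite !length_app. rewrite length_app in Upt. rewrite Hl, Ht in *.
    destruct x, y.
    + specialize (IH c t1 t2 H1 H2 eq_refl Ht ltac:(lia)). lia.
    + lia.
    + lia.
    + apply IH; auto.
Qed.

Definition blk (s : nat) (b : list bool) := okw b /\ length b = s /\ hdf b = true.

Lemma hdf_zeros j : hdf (repeat false j) = false.
Proof. destruct j; reflexivity. Qed.

Lemma okw_zj b j : okw b -> okw (b ++ repeat false j).
Proof. intros H. apply okw_app; auto using okw_zeros. intros _; apply hdf_zeros. Qed.

Lemma val_hd_true w : hdf w = true -> (fibF (length w) <= val w)%nat.
Proof. destruct w as [|x w]; simpl; try discriminate. intros ->. simpl. lia. Qed.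

Lemma V_ge b s j : blk s b -> (fibF (s + j) <= V b j)%nat.
Proof.
  intros [H1 [H2 H3]]. unfold V.
  pose proof (val_hd_true (b ++ repeat false j)) as H.
  rewrite length_app, repeat_length, H2 in H. apply H.
  destruct b; simpl in *; auto; discriminate.
Qed.

Lemma V_lt b s j : blk s b -> (V b j < fibF (S (s + j)))%nat.
Proof.
  intros [H1 [H2 H3]]. unfold V.
  pose proof (val_upper (b ++ repeat false j) (okw_zj b j H1)) as [U _].
  rewrite length_app, repeat_length, H2 in U. exact U.
Qed.

Lemma Lm_pos b j : (1 <= Lm b j)%nat.
Proof. unfold Lm. destruct (last b false); apply fib_pos. Qed.

Lemma inFs_blk s b : (1 <= s)%nat -> inFs s b -> blk s b.
Proof.
  intros Hs [m [e [[Z1 [Z2 [Z3 Z4]]] [Hl Hf]]]].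
  apply no_consec_okw in Z3. subst b.
  pose proof (firstn_skipn s e) as E.
  split; [|split].
  - apply (okw_app_l _ (skipn s e)). rewrite E. exact Z3.
  - apply firstn_length_le. exact Hl.
  - destruct e as [|x e]. simpl in Z1; lia. destruct s as [|s]. lia.
    simpl. unfold bit in Z2. simpl in Z2. destruct x; auto; discriminate.
Qed.

Lemma blk_inFs s c : (1 <= s)%nat -> blk s c -> inFs s c.
Proof.
  intros Hs [H1 [H2 H3]]. exists (val c). exists c. split; [|split].
  - split; [|split; [|split]].
    + lia.
    + unfold bit. destruct c as [|x c]; simpl in *; try discriminate. rewrite H3. reflexivity.
    + apply no_consec_okw; auto.
    + symmetry. apply dotF_val.
  - lia.
  - apply firstn_all2. lia.
Qed.

Lemma LB_char s b m : (1 <= s)%nat -> blk s b ->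
  (LB s m b <-> exists j, (V b j <= m < V b j + Lm b j)%nat).
Proof.
  intros Hs Hb. split.
  - intros [e [[Z1 [Z2 [Z3 Z4]]] [Hl Hf]]]. apply no_consec_okw in Z3.
    pose proof (firstn_skipn s e) as E. rewrite Hf in E.
    set (t := skipn s e) in *. clearbody t.
    exists (length t). rewrite Z4, dotF_val, <- E.
    apply I1. rewrite E. exact Z3.
  - intros [j Hj]. destruct Hb as [B1 [B2 B3]].
    destruct (I2 b j (m - V b j) B1 ltac:(lia)) as [t [T1 [T2 T3]]].
    exists (b ++ t). split; [|split].
    + split; [|split; [|split]].
      * rewrite length_app. lia.
      * unfold bit. destruct b as [|x b]; simpl in *; try discriminate. rewrite B3. reflexivity.
      * apply no_consec_okw; auto.
      * rewrite dotF_val, T3. lia.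
    + rewrite length_app. lia.
    + rewrite <- B2. rewrite firstn_app, firstn_all, Nat.sub_diag. simpl. apply app_nil_r.
Qed.

Lemma word_of M m : (m < fibF (S M))%nat -> (fibF M <= m)%nat ->
  exists w, okw w /\ length w = M /\ val w = m /\ hdf w = true.
Proof.
  intros H1 H2. destruct (rep_exists M m H1) as [w [W1 [W2 [W3 _]]]].
  exists w. repeat split; auto.
  destruct (hdf w) eqn:E; auto.
  pose proof (val_upper w W1) as [_ U]. specialize (U E). rewrite W2 in U. lia.
Qed.

Lemma Key s b j : (1 <= s)%nat -> blk s b -> (V b j + Lm b j < fibF (S (s + j)))%nat ->
  exists p t, blk s p /\ length t = j /\ okw (p ++ t) /\ val (p ++ t) = (V b j + Lm b j)%nat
    /\ (val b < val p)%nat.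
Proof.
  intros Hs Hb Hlt. pose proof (V_ge b s j Hb) as Hge.
  destruct (word_of (s + j) (V b j + Lm b j) Hlt ltac:(lia)) as [w [W1 [W2 [W3 W4]]]].
  pose proof (firstn_skipn s w) as E.
  assert (Hp : blk s (firstn s w)).
  { split; [|split].
    - apply (okw_app_l _ (skipn s w)). rewrite E. exact W1.
    - apply firstn_length_le. lia.
    - destruct w as [|x w]. simpl in W2; lia. destruct s as [|s]. lia. exact W4. }
  exists (firstn s w), (skipn s w).
  assert (Ht : length (skipn s w) = j) by (rewrite length_skipn; lia).
  assert (Hcmp : (val b < val (firstn s w))%nat).
  { pose proof Hb as [B1 [B2 B3]]. pose proof Hp as [P1 [P2 P3]].
  destruct (Nat.lt_trichotomy (val (firstn s w)) (val b)) as [Hc|[Hc|Hc]]; auto.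
  - exfalso. pose proof (mono (firstn s w) b (skipn s w) (repeat false j)) as M.
    rewrite E in M. specialize (M W1 (okw_zj b j B1) ltac:(lia) ltac:(rewrite repeat_length; lia) Hc).
    unfold V in *. lia.
  - exfalso. assert (Hpb : firstn s w = b) by (apply val_uniq; auto; lia).
    rewrite Hpb in E. pose proof (I1 b (skipn s w)) as I. rewrite E, Ht in I.
    specialize (I W1). lia. }
  rewrite E. repeat split; auto; apply Hp.
Qed.

Lemma top_bound s b j : blk s b -> (V b j + Lm b j <= fibF (S (s + j)))%nat.
Proof.
  intros Hb. pose proof Hb as [B1 [B2 B3]].
  destruct (I2 b j (Lm b j - 1) B1 ltac:(pose proof (Lm_pos b j); lia)) as [t [T1 [T2 T3]]].
  pose proof (val_upper _ T2) as [U _]. rewrite length_app, B2, T1 in U.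
  pose proof (Lm_pos b j). lia.
Qed.

Lemma T_case1 s b c j : (1 <= s)%nat -> blk s b -> blk s c -> val c = S (val b) ->
  V c j = (V b j + Lm b j)%nat.
Proof.
  intros Hs Hb Hc Hv. pose proof Hb as [B1 [B2 B3]]. pose proof Hc as [C1 [C2 C3]].
  pose proof (Lm_pos b j) as HL.
  destruct (I2 b j (Lm b j - 1) B1 ltac:(lia)) as [t [T1 [T2 T3]]].
  assert (Hge : (V b j + Lm b j <= V c j)%nat).
  { pose proof (mono b c t (repeat false j) T2 (okw_zj c j C1) ltac:(lia)
      ltac:(rewrite repeat_length; lia) ltac:(lia)). unfold V in *. lia. }
  destruct (Nat.eq_dec (V c j) (V b j + Lm b j)) as [Heq|Hne]; auto. exfalso.
  pose proof (V_lt c s j Hc).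
  destruct (Key s b j Hs Hb ltac:(lia)) as [p [t' [P1 [P2 [P3 [P4 P5]]]]]].
  destruct (Nat.eq_dec (val p) (val c)) as [Hpc|Hpc].
  - assert (p = c) by (destruct P1 as [? [? ?]]; apply val_uniq; auto; lia). subst p.
    pose proof (I1 c t' P3) as II. rewrite P2 in II. lia.
  - pose proof (mono c p (repeat false j) t' (okw_zj c j C1) P3) as M.
    destruct P1 as [? [? ?]].
    specialize (M ltac:(lia) ltac:(rewrite repeat_length; lia) ltac:(lia)). unfold V in *. lia.
Qed.

Lemma T_case2 s b j : (1 <= s)%nat -> blk s b -> (val b + 1 = fibF (S s))%nat ->
  (V b j + Lm b j = fibF (S (s + j)))%nat.
Proof.
  intros Hs Hb Hv. pose proof (top_bound s b j Hb).
  destruct (Nat.eq_dec (V b j + Lm b j) (fibF (S (s + j)))) as [E|E]; auto. exfalso.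
  destruct (Key s b j Hs Hb ltac:(lia)) as [p [t' [P1 [P2 [P3 [P4 P5]]]]]].
  destruct P1 as [Q1 [Q2 Q3]]. pose proof (val_upper p Q1) as [U _]. rewrite Q2 in U. lia.
Qed.

Lemma no_succ s b : (1 <= s)%nat -> blk s b ->
  ~ (exists c, inFs s c /\ dotF c = S (dotF b)) -> (val b + 1 = fibF (S s))%nat.
Proof.
  intros Hs Hb Hn. pose proof Hb as [B1 [B2 B3]].
  pose proof (val_upper b B1) as [U _]. rewrite B2 in U.
  destruct (Nat.eq_dec (val b + 1) (fibF (S s))) as [E|E]; auto. exfalso.
  destruct (rep_exists s (val b + 1) ltac:(lia)) as [c [C1 [C2 [C3 _]]]].
  apply Hn. exists c. split.
  - apply blk_inFs; auto. split; [|split]; auto.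
    destruct (hdf c) eqn:Eh; auto.
    pose proof (val_upper c C1) as [_ U2]. specialize (U2 Eh).
    pose proof (val_hd_true b B3). rewrite B2 in *. rewrite C2 in U2. lia.
  - rewrite !dotF_val. lia.
Qed.

Fixpoint rep10' (j : nat) : list bool :=
  match j with O => [] | S j' => true :: false :: rep10' j' end.

Lemma val_rep10 i w : val w = fibF (S (length w)) ->
  val (rep10 i ++ w) = fibF (S (length (rep10 i ++ w))).
Proof.
  induction i as [|i IH]; intros H; simpl; auto.
  rewrite IH by auto. rewrite length_app. simpl length.
  rewrite length_app in *. 
  rewrite (fib_rec (S (length (rep10 i) + length w))). lia.
Qed.

Lemma length_rep10 i : length (rep10 i) = (2 * i)%nat.
Proof. induction i; simpl; lia. Qed.

Lemma bspecial_prop s : (2 <= s)%nat ->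
  length (bspecial s) = s /\ forall j, V (bspecial s) j = fibF (S (s + j)).
Proof.
  intros Hs. unfold bspecial. destruct (Nat.even s) eqn:E.
  - apply Nat.even_spec in E. destruct E as [h Hh].
    replace ((s - 2) / 2)%nat with (h - 1)%nat.
    2:{ replace (s - 2)%nat with ((h - 1) * 2)%nat by lia. rewrite Nat.div_mul; lia. }
    split.
    + rewrite length_app, length_rep10. simpl. lia.
    + intros j. unfold V. rewrite <- app_assoc. rewrite val_rep10.
      * rewrite !length_app, length_rep10, repeat_length. simpl. f_equal. lia.
      * cbn [app val length]. rewrite repeat_length, val_zeros.
        rewrite (fib_rec (S j)). lia.
  - assert (Ho : Nat.odd s = true) by (unfold Nat.odd; rewrite E; auto).
    apply Nat.odd_spec in Ho. destruct Ho as [h Hh].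
    replace ((s - 3) / 2)%nat with (h - 1)%nat.
    2:{ replace (s - 3)%nat with ((h - 1) * 2)%nat by lia. rewrite Nat.div_mul; lia. }
    split.
    + rewrite length_app, length_rep10. simpl. lia.
    + intros j. unfold V. rewrite <- app_assoc. rewrite val_rep10.
      * rewrite !length_app, length_rep10, repeat_length. simpl. f_equal. lia.
      * cbn [app val length]. rewrite repeat_length, val_zeros.
        rewrite (fib_rec (S (S j))). lia.
Qed.

Lemma tilde_prop s b : (2 <= s)%nat -> inFs s b ->
  length (tilde s b) = s /\ forall j, V (tilde s b) j = (V b j + Lm b j)%nat.
Proof.
  intros Hs Hb. apply inFs_blk in Hb; [|lia].
  unfold tilde. destruct (excluded_middle_informative _) as [H|H].
  - destruct (constructive_indefinite_description _ H) as [c [Hc1 Hc2]]. simpl.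
    apply inFs_blk in Hc1; [|lia]. split. apply Hc1.
    intros j. apply T_case1 with s; auto. lia. rewrite <- !dotF_val. auto.
  - pose proof (no_succ s b ltac:(lia) Hb H) as E.
    destruct (bspecial_prop s Hs) as [L1 L2]. split; auto.
    intros j. rewrite L2. symmetry. apply T_case2; auto. lia.
Qed.

Lemma frac_shift x z : frac_part (x + IZR z) = frac_part x.
Proof.
  pose proof (Rplus_Int_part_frac_part x) as E. pose proof (base_fp x) as [B1 B2].
  destruct (Int_part_frac_part_spec (x + IZR z) (Int_part x + z) (frac_part x)) as [_ H].
  split; lra. rewrite plus_IZR. lra. auto.
Qed.

Lemma frac_le r : 0 <= r -> frac_part r <= r.
Proof.
  intros Hr. pose proof (Rplus_Int_part_frac_part r) as E. pose proof (base_fp r) as [B1 B2].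
  assert (0 <= IZR (Int_part r)).
  { assert (H : -1 < IZR (Int_part r)) by lra. apply lt_IZR in H. apply IZR_le. lia. }
  lra.
Qed.

Lemma frac_add_le a d : 0 <= d -> frac_part (a + d) <= frac_part a + d.
Proof.
  intros Hd. pose proof (Rplus_Int_part_frac_part a) as E. pose proof (base_fp a) as [B1 B2].
  replace (a + d) with ((frac_part a + d) + IZR (Int_part a)) by lra.
  rewrite frac_shift. apply frac_le. lra.
Qed.

Lemma frac_INR_add (n : nat) r : 0 <= r -> frac_part (INR n + r) <= r.
Proof.
  intros Hr. rewrite INR_IZR_INZ. rewrite Rplus_comm. rewrite frac_shift. apply frac_le; auto.
Qed.

Lemma sqrt5_sq : sqrt 5 * sqrt 5 = 5.
Proof. apply sqrt_sqrt. lra. Qed.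

Lemma sqrt5_bounds : 2 < sqrt 5 < 3.
Proof.
  pose proof sqrt5_sq. pose proof (sqrt_pos 5). split; nra.
Qed.

Lemma phi_sq : phi * phi = phi + 1.
Proof. unfold phi. pose proof sqrt5_sq. nra. Qed.

Lemma phi_bounds : 3/2 < phi < 2.
Proof. unfold phi. pose proof sqrt5_bounds. lra. Qed.

Lemma phi_omega : phi * omega = 1.
Proof. unfold omega. field. pose proof phi_bounds. lra. Qed.

Lemma omega_val : omega = phi - 1.
Proof. unfold omega. pose proof phi_bounds. pose proof phi_sq.
  apply Rmult_eq_reg_l with phi; [|lra]. rewrite Rinv_r by lra. nra. Qed.

Definition psi := 1 - phi.

Lemma psi_sq : psi * psi = psi + 1.
Proof. unfold psi. pose proof phi_sq. nra. Qed.

Lemma psi_abs : Rabs psi < 1.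
Proof. unfold psi. pose proof phi_bounds. apply Rabs_def1; lra. Qed.

Lemma sqrt5_phi : sqrt 5 = phi - psi.
Proof. unfold psi, phi. lra. Qed.

Lemma binet n : INR (fibF n) = (phi ^ (S n) - psi ^ (S n)) / sqrt 5.
Proof.
  pose proof sqrt5_bounds as Hs.
  assert (H: forall n, INR (fibF n) = (phi ^ (S n) - psi ^ (S n)) / sqrt 5 /\
     INR (fibF (S n)) = (phi ^ (S (S n)) - psi ^ (S (S n))) / sqrt 5).
  { induction n0 as [|n0 [IH1 IH2]].
    - rewrite fib0, fib1. rewrite sqrt5_phi. pose proof phi_bounds. pose proof phi_sq.
      assert (Hd: phi - psi <> 0) by (unfold psi; lra).
      split; simpl; unfold Rdiv; apply Rmult_eq_reg_r with (phi - psi); auto;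
        rewrite Rmult_assoc, Rinv_l; auto; unfold psi; nra.
    - split; auto. rewrite fib_rec, plus_INR, IH1, IH2.
      replace (phi ^ S (S (S n0))) with (phi ^ S n0 * (phi * phi)) by (simpl; ring).
      replace (psi ^ S (S (S n0))) with (psi ^ S n0 * (psi * psi)) by (simpl; ring).
      replace (phi ^ S (S n0)) with (phi ^ S n0 * phi) by (simpl; ring).
      replace (psi ^ S (S n0)) with (psi ^ S n0 * psi) by (simpl; ring).
      rewrite phi_sq, psi_sq. field. lra. }
  apply H.
Qed.

Lemma pow_le1 x n : 0 <= x <= 1 -> x ^ n <= 1.
Proof. intros H. induction n; simpl. lra. pose proof (pow_le x n (proj1 H)). nra. Qed.

Lemma binet_err n : Rabs (INR (fibF n) - phi ^ (S n) / sqrt 5) < 1.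
Proof.
  rewrite binet. pose proof sqrt5_bounds.
  replace ((phi ^ S n - psi ^ S n) / sqrt 5 - phi ^ S n / sqrt 5) with (- (psi ^ S n / sqrt 5)) by (field; lra).
  rewrite Rabs_Ropp. unfold Rdiv. rewrite Rabs_mult, <- RPow_abs.
  rewrite Rabs_inv, (Rabs_right (sqrt 5)) by lra.
  pose proof psi_abs. pose proof (Rabs_pos psi).
  assert (Rabs psi ^ S n <= 1) by (apply pow_le1; lra).
  assert (0 <= Rabs psi ^ S n) by (apply pow_le; lra).
  assert (/ sqrt 5 < 1) by (rewrite <- Rinv_1; apply Rinv_lt_contravar; lra).
  assert (0 < / sqrt 5) by (apply Rinv_0_lt_compat; lra).
  nra.
Qed.

Fixpoint Dv (w : list bool) : R :=
  match w with [] => 0 | x :: w' => (if x then 1 else 0) + omega * Dv w' end.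

Lemma fold_scale (f : nat -> R) c l :
  fold_right Rplus 0 (map (fun k => c * f k) l) = c * fold_right Rplus 0 (map f l).
Proof. induction l; simpl. ring. rewrite IHl. ring. Qed.

Lemma dotHat_Dv w : dotHat w = Dv w.
Proof.
  induction w as [|x w IH]. reflexivity.
  unfold dotHat in *. cbn [length]. cbn [seq]. rewrite <- (seq_shift (length w) 1). cbn [map fold_right].
  rewrite map_map. simpl Dv. f_equal.
  - unfold bit. simpl. destruct x; simpl; ring.
  - rewrite <- IH. rewrite <- fold_scale. f_equal. apply map_ext_in. intros k Hk. apply in_seq in Hk.
    rewrite bit_cons by lia. replace (S k - 1)%nat with (S (k - 1)) by lia. simpl. ring.
Qed.

Definition A (s j : nat) : R := phi ^ (s + j + 1) / sqrt 5.

Lemma binet_word w j : Rabs (INR (val (w ++ repeat false j)) - A (length w) j * Dv w) <= INR (length w).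
Proof.
  unfold A. induction w as [|x w IH].
  - simpl. rewrite val_zeros. simpl. rewrite Rmult_0_r, Rminus_0_r, Rabs_R0. lra.
  - cbn [app val Dv length]. rewrite length_app, repeat_length.
    pose proof (binet_err (S (length w + j))) as B. pose proof phi_omega as Hpo.
    pose proof sqrt5_bounds.
    set (P := phi ^ (length w + j + 1) / sqrt 5) in *.
    assert (EP: phi ^ (S (length w) + j + 1) / sqrt 5 = phi * P).
    { unfold P. replace (S (length w) + j + 1)%nat with (S (length w + j + 1)) by lia. simpl. field. lra. }
    assert (EP2: phi ^ S (S (length w + j)) / sqrt 5 = phi * P).
    { unfold P. replace (S (S (length w + j)))%nat with (S (length w + j + 1)) by lia. simpl. field. lra. }
    rewrite EP. rewrite EP2 in B. rewrite S_INR.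
    set (a := fibF (S (length w + j))) in *.
    set (v := val (w ++ repeat false j)) in *.
    destruct x.
    + rewrite plus_INR.
      replace (INR a + INR v - phi * P * (1 + omega * Dv w)) with
        ((INR a - phi * P) + (INR v - P * Dv w)).
      * eapply Rle_trans. apply Rabs_triang. lra.
      * replace (phi * P * (1 + omega * Dv w)) with (phi * P + (phi * omega) * P * Dv w) by ring.
        rewrite Hpo. ring.
    + rewrite Nat.add_0_l.
      replace (INR v - phi * P * (0 + omega * Dv w)) with (INR v - P * Dv w).
      * lra.
      * replace (phi * P * (0 + omega * Dv w)) with ((phi * omega) * P * Dv w) by ring.
        rewrite Hpo. ring.
Qed.

Definition lp := ln phi.
Definition rho0 := phi / sqrt 5.
Definition Y (m : nat) := ln (INR m / rho0) / lp.

Lemma lp_pos : 0 < lp.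
Proof. unfold lp. rewrite <- ln_1. apply ln_increasing; pose proof phi_bounds; lra. Qed.

Lemma rho0_pos : 0 < rho0.
Proof. unfold rho0. pose proof phi_bounds; pose proof sqrt5_bounds. apply Rdiv_lt_0_compat; lra. Qed.

Lemma exp_le_mono x y : x <= y -> exp x <= exp y.
Proof. intros [H|H]. left; apply exp_increasing; auto. right; subst; auto. Qed.

Lemma ln_le_mono x y : 0 < x -> x <= y -> ln x <= ln y.
Proof. intros H [H1|H1]. left; apply ln_increasing; auto. right; subst; auto. Qed.

Lemma phi_pow_exp n : phi ^ n = exp (INR n * lp).
Proof. rewrite <- Rpower_pow. reflexivity. pose proof phi_bounds; lra. Qed.

Lemma A_eq s j : A s j = rho0 * phi ^ (s + j).
Proof. unfold A, rho0. rewrite Nat.add_1_r. simpl. field. pose proof sqrt5_bounds; lra. Qed.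

Lemma A_pos s j : 0 < A s j.
Proof. rewrite A_eq. pose proof rho0_pos. pose proof (pow_lt phi (s+j) ltac:(pose proof phi_bounds; lra)). nra. Qed.

Lemma nat_above r : exists n : nat, r < INR n.
Proof. destruct (INR_archimed 1 r ltac:(lra)) as [n Hn]. exists n. lra. Qed.

Lemma unbounded s X C : (forall j, A s j * X <= C) -> X <= 0.
Proof.
  intros H. destruct (Rle_lt_dec X 0) as [?|HX]; auto. exfalso.
  destruct (Pow_x_infinity phi ltac:(rewrite Rabs_right; pose proof phi_bounds; lra)
     ((Rabs C + 1) / rho0 / X)) as [N HN].
  specialize (H N). specialize (HN (s + N)%nat ltac:(lia)).
  rewrite Rabs_right in HN by (apply Rle_ge, pow_le; pose proof phi_bounds; lra).
  rewrite A_eq in H. pose proof rho0_pos. pose proof (Rle_abs C).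
  apply Rge_le in HN.
  apply (Rmult_le_compat_l (rho0 * X)) in HN; [|nra].
  replace (rho0 * X * ((Rabs C + 1) / rho0 / X)) with (Rabs C + 1) in HN by (field; lra).
  nra.
Qed.

Lemma core s Db Dt (Vb Vt : nat -> nat) (P : nat -> Prop) :
  1 <= Db -> 1 <= Dt ->
  (forall j, Rabs (INR (Vb j) - A s j * Db) <= INR s) ->
  (forall j, Rabs (INR (Vt j) - A s j * Dt) <= INR s) ->
  (forall m, P m <-> exists j, (Vb j <= m < Vt j)%nat) ->
  forall eta, 0 < eta -> exists m0 : nat, forall m, (m0 <= m)%nat ->
   (frac_part (Y m - ln Db / lp - eta) < (ln Dt / lp - ln Db / lp) - 2 * eta -> P m) /\
   (P m -> frac_part (Y m - ln Db / lp + eta) < (ln Dt / lp - ln Db / lp) + 2 * eta).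
Proof.
  intros HDb HDt Hb Ht Hc eta Heta.
  pose proof lp_pos as Hlp. pose proof rho0_pos as Hr0.
  set (E := exp (eta * lp)).
  assert (HE : 1 < E).
  { unfold E. rewrite <- exp_0. apply exp_increasing. nra. }
  set (c := 1 - / E).
  assert (Hc0 : 0 < c) by (unfold c; assert (/ E < 1) by (rewrite <- Rinv_1; apply Rinv_lt_contravar; lra); lra).
  assert (HcE : c <= E - 1).
  { unfold c. assert (E + / E >= 2).
    { assert (0 < / E) by (apply Rinv_0_lt_compat; lra).
      assert (E * / E = 1) by (field; lra). nra. } lra. }
  assert (HEc : / E = 1 - c) by (unfold c; ring).
  set (B := INR s / c).
  assert (HB : forall a, B <= a -> INR s <= a * c).
  { intros a Ha. unfold B in Ha. apply (Rmult_le_compat_r c) in Ha; [|lra].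
    replace (INR s / c * c) with (INR s) in Ha by (field; lra). lra. }
  pose proof (pos_INR s) as Hs0.
  destruct (nat_above (INR s + Dt * B)) as [m1 Hm1].
  destruct (nat_above (B * Db * exp ((eta + 1) * lp))) as [m2 Hm2].
  destruct (nat_above (rho0 * exp ((ln Db / lp + eta + INR s + 1) * lp))) as [m3 Hm3].
  exists (S (m1 + m2 + m3)). intros m Hm.
  assert (Hm1' : INR m1 <= INR m) by (apply le_INR; lia).
  assert (Hm2' : INR m2 <= INR m) by (apply le_INR; lia).
  assert (Hm3' : INR m3 <= INR m) by (apply le_INR; lia).
  assert (Hmpos : 0 < INR m) by (apply lt_0_INR; lia).
  assert (HmY : INR m / rho0 = exp (Y m * lp)).
  { unfold Y. replace (ln (INR m / rho0) / lp * lp) with (ln (INR m / rho0)) by (field; lra).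
    rewrite exp_ln; auto. apply Rdiv_lt_0_compat; lra. }
  assert (HDbexp : exp (ln Db / lp * lp) = Db).
  { replace (ln Db / lp * lp) with (ln Db) by (field; lra). apply exp_ln; lra. }
  assert (HDtexp : exp (ln Dt / lp * lp) = Dt).
  { replace (ln Dt / lp * lp) with (ln Dt) by (field; lra). apply exp_ln; lra. }
  split.
  -
    intros Hf.
    set (x := Y m - ln Db / lp - eta) in *.
    pose proof (Rplus_Int_part_frac_part x) as Ex. pose proof (base_fp x) as [F1 F2].
    assert (HY3 : ln Db / lp + eta + INR s + 1 <= Y m).
    { assert (Hq : exp ((ln Db / lp + eta + INR s + 1) * lp) <= exp (Y m * lp)).
      { rewrite <- HmY. apply (Rmult_le_reg_l rho0); auto. unfold Rdiv.
        replace (rho0 * (INR m * / rho0)) with (INR m) by (field; lra). lra. }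
      destruct (Rle_lt_dec (ln Db / lp + eta + INR s + 1) (Y m)) as [?|Hlt]; auto.
      exfalso. apply (Rmult_lt_compat_r lp) in Hlt; auto. apply exp_increasing in Hlt. lra. }
    assert (HN : INR s < IZR (Int_part x)) by (unfold x in *; lra).
    set (n := Z.to_nat (Int_part x)).
    assert (Hn : INR n = IZR (Int_part x)).
    { unfold n. rewrite INR_IZR_INZ. rewrite Z2Nat.id; auto.
      apply le_IZR. pose proof (pos_INR s). lra. }
    assert (Hsn : (s <= n)%nat) by (apply INR_le; lra).
    set (j := (n - s)%nat).
    assert (HA : A s j = rho0 * exp (INR n * lp)).
    { rewrite A_eq, phi_pow_exp. unfold j. replace (s + (n - s))%nat with n by lia. reflexivity. }
    assert (Hlow : A s j * Db * E <= INR m).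
    { rewrite HA. apply (Rmult_le_reg_r (/ rho0)). apply Rinv_0_lt_compat; auto.
      replace (INR m * / rho0) with (INR m / rho0) by reflexivity. rewrite HmY.
      replace (rho0 * exp (INR n * lp) * Db * E * / rho0) with (exp (INR n * lp) * Db * E) by (field; lra).
      rewrite <- HDbexp. unfold E. rewrite <- !exp_plus. apply exp_le_mono.
      rewrite Hn. assert (HH: IZR (Int_part x) + ln Db / lp + eta <= Y m) by (unfold x in *; lra). rewrite <- !Rmult_plus_distr_r. apply Rmult_le_compat_r; lra. }
    assert (Hup : INR m < A s j * Dt * / E).
    { rewrite HA. apply (Rmult_lt_reg_r (/ rho0)). apply Rinv_0_lt_compat; auto.
      replace (INR m * / rho0) with (INR m / rho0) by reflexivity. rewrite HmY.
      replace (rho0 * exp (INR n * lp) * Dt * / E * / rho0) with (exp (INR n * lp) * Dt * / E) by (field; lra).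
      rewrite <- HDtexp. unfold E. rewrite <- exp_Ropp, <- !exp_plus. apply exp_increasing.
      rewrite Hn. assert (HH: Y m < IZR (Int_part x) + ln Dt / lp - eta) by (unfold x in *; lra).
      replace (IZR (Int_part x) * lp + ln Dt / lp * lp + - (eta * lp)) with
        ((IZR (Int_part x) + ln Dt / lp - eta) * lp) by ring.
      apply Rmult_lt_compat_r; lra. }
    assert (HAB : B <= A s j).
    { rewrite HA.
      assert (exp ((Y m - ln Db / lp - eta - 1) * lp) <= exp (INR n * lp)).
      { apply exp_le_mono. apply Rmult_le_compat_r; [lra| rewrite Hn; unfold x in *; lra]. }
      replace ((Y m - ln Db / lp - eta - 1) * lp) with (Y m * lp + (- (ln Db / lp * lp) + - ((eta + 1) * lp))) in H by ring.
      rewrite !exp_plus, !exp_Ropp, <- HmY, HDbexp in H.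
      assert (0 < exp ((eta + 1) * lp)) by apply exp_pos.
      apply (Rmult_le_compat_l rho0) in H; [|lra].
      replace (rho0 * (INR m / rho0 * (/ Db * / exp ((eta + 1) * lp)))) with
        (INR m / (Db * exp ((eta + 1) * lp))) in H by (field; split; lra).
      assert (B <= INR m / (Db * exp ((eta + 1) * lp))).
      { apply (Rmult_le_reg_r (Db * exp ((eta + 1) * lp))). nra.
        replace (INR m / (Db * exp ((eta + 1) * lp)) * (Db * exp ((eta + 1) * lp))) with (INR m) by (field; split; lra).
        lra. }
      lra. }
    apply Hc. exists j. pose proof (A_pos s j) as HAp.
    specialize (HB _ HAB).
    pose proof (Hb j) as Hbj. pose proof (Ht j) as Htj.
    apply Rabs_le_between in Hbj. apply Rabs_le_between in Htj.
    split.
    + apply INR_le. 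
      assert (A s j * c <= A s j * Db * (E - 1)) by (apply Rmult_le_compat; nra).
      nra.
    + apply INR_lt. rewrite HEc in Hup.
      assert (A s j * c <= A s j * Dt * c) by nra.
      nra.
  -
    intros HP. apply Hc in HP. destruct HP as [j [Hj1 Hj2]].
    apply le_INR in Hj1. apply lt_INR in Hj2.
    pose proof (A_pos s j) as HAp.
    pose proof (Hb j) as Hbj. pose proof (Ht j) as Htj.
    apply Rabs_le_between in Hbj. apply Rabs_le_between in Htj.
    assert (HAB : B <= A s j).
    { assert (INR m - INR s < A s j * Dt) by lra.
      assert (Dt * B < A s j * Dt) by lra. nra. }
    specialize (HB _ HAB).
    assert (Hlow : A s j * Db * / E <= INR m).
    { rewrite HEc. assert (A s j * c <= A s j * Db * c) by nra. nra. }
    assert (Hup : INR m < A s j * Dt * E).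
    { assert (A s j * c <= A s j * Dt * (E - 1)) by (apply Rmult_le_compat; nra). nra. }
    set (n := (s + j)%nat).
    assert (HA : A s j = rho0 * exp (INR n * lp)) by (rewrite A_eq, phi_pow_exp; reflexivity).
    rewrite HA in Hlow, Hup.
    assert (HposE : 0 < / E) by (apply Rinv_0_lt_compat; lra).
    assert (Hl1 : ln (exp (INR n * lp) * Db * / E) <= ln (INR m / rho0)).
    { apply ln_le_mono. apply Rmult_lt_0_compat; [apply Rmult_lt_0_compat|]; try lra; apply exp_pos.
      apply (Rmult_le_reg_l rho0); auto. unfold Rdiv.
      replace (rho0 * (INR m * / rho0)) with (INR m) by (field; lra). lra. }
    assert (Hl2 : ln (INR m / rho0) < ln (exp (INR n * lp) * Dt * E)).
    { apply ln_increasing. apply Rdiv_lt_0_compat; lra.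
      apply (Rmult_lt_reg_l rho0); auto. unfold Rdiv.
      replace (rho0 * (INR m * / rho0)) with (INR m) by (field; lra). lra. }
    assert (Hep : 0 < exp (INR n * lp)) by apply exp_pos.
    rewrite !ln_mult in Hl1, Hl2; try (apply exp_pos); try lra; try (apply Rmult_lt_0_compat; lra).
    rewrite ln_Rinv in Hl1 by lra. unfold E in Hl1, Hl2. rewrite !ln_exp in Hl1, Hl2.
    assert (HYl : Y m * lp = ln (INR m / rho0)) by (unfold Y; field; lra).
    set (r := Y m - ln Db / lp + eta - INR n).
    assert (Hrr0 : 0 <= r).
    { unfold r. apply (Rmult_le_reg_r lp); auto. 
      replace ((Y m - ln Db / lp + eta - INR n) * lp) with (Y m * lp - ln Db + eta * lp - INR n * lp) by (field; lra).
      rewrite HYl. lra. }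
    assert (Hr1 : r < ln Dt / lp - ln Db / lp + 2 * eta).
    { unfold r. apply (Rmult_lt_reg_r lp); auto.
      replace ((Y m - ln Db / lp + eta - INR n) * lp) with (Y m * lp - ln Db + eta * lp - INR n * lp) by (field; lra).
      replace ((ln Dt / lp - ln Db / lp + 2 * eta) * lp) with (ln Dt - ln Db + 2 * eta * lp) by (field; lra).
      rewrite HYl. lra. }
    replace (Y m - ln Db / lp + eta) with (INR n + r) by (unfold r; ring).
    pose proof (frac_INR_add n r Hrr0). lra.
Qed.

Lemma ind_01 (P : Prop) : ind P = 0 \/ ind P = 1.
Proof. unfold ind. destruct (excluded_middle_informative P); auto. Qed.

Lemma ind_true (P : Prop) : P -> ind P = 1.
Proof. unfold ind. destruct (excluded_middle_informative P); tauto. Qed.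

Lemma ind_false (P : Prop) : ~ P -> ind P = 0.
Proof. unfold ind. destruct (excluded_middle_informative P); tauto. Qed.

Lemma ind_bounds (P : Prop) : 0 <= ind P <= 1.
Proof. destruct (ind_01 P) as [H|H]; rewrite H; lra. Qed.

Lemma ind_mono (P Q : Prop) : (P -> Q) -> ind P <= ind Q.
Proof.
  intros H. unfold ind. destruct (excluded_middle_informative P); destruct (excluded_middle_informative Q); try lra.
  tauto.
Qed.

Fixpoint cs (Q : nat -> Prop) (n : nat) : R :=
  match n with O => 0 | S n' => cs Q n' + ind (Q (S n')) end.

Lemma cnt_cs (P : nat -> Prop) n : cnt P n = cs (fun k => P (S k)) n.
Proof. induction n. reflexivity. simpl. rewrite IHn. reflexivity. Qed.

Lemma cnt_S (P : nat -> Prop) n : cs P (S n) = cs P n + ind (P (S n)).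
Proof. reflexivity. Qed.

Lemma cnt_bounds (P : nat -> Prop) n : 0 <= cs P n <= INR n.
Proof.
  induction n. simpl. lra. rewrite cnt_S, S_INR. pose proof (ind_bounds (P (S n))). lra.
Qed.

Lemma cnt_mono (P Q : nat -> Prop) n : (forall k, P k -> Q k) -> cs P n <= cs Q n.
Proof.
  intros H. induction n. simpl; lra. rewrite !cnt_S. pose proof (ind_mono (P (S n)) (Q (S n)) (H _)). lra.
Qed.

Lemma cnt_ext (P Q : nat -> Prop) n : (forall k, P k <-> Q k) -> cs P n = cs Q n.
Proof. intros H. apply Rle_antisym; apply cnt_mono; firstorder. Qed.

Lemma cnt_mono_ev (P Q : nat -> Prop) K0 n : (forall k, (K0 <= k)%nat -> P k -> Q k) ->
  cs P n <= cs Q n + INR K0.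
Proof.
  intros H. induction n. simpl. pose proof (pos_INR K0). lra.
  rewrite !cnt_S. destruct (le_lt_dec K0 (S n)) as [Hk|Hk].
  - pose proof (ind_mono (P (S n)) (Q (S n)) (H _ Hk)). lra.
  - (* all previous k < K0 *)
    assert (cs P (S n) <= INR (S n)) by apply cnt_bounds.
    assert (INR (S n) <= INR K0) by (apply le_INR; lia).
    pose proof (cnt_bounds Q (S n)). rewrite cnt_S in *. lra.
Qed.

Fixpoint sumR (f : nat -> R) (N : nat) : R :=
  match N with O => 0 | S N' => sumR f N' + f N' end.

Lemma sumR_plus f g N : sumR (fun i => f i + g i) N = sumR f N + sumR g N.
Proof. induction N; simpl; [lra|]. rewrite IHN. ring. Qed.

Lemma sumR_le f g N : (forall i, (i < N)%nat -> f i <= g i) -> sumR f N <= sumR g N.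
Proof. induction N; simpl; intros H. lra. pose proof (H N ltac:(lia)). pose proof (IHN ltac:(intros; apply H; lia)). lra. Qed.

Lemma sumR_const a N : sumR (fun _ => a) N = INR N * a.
Proof. induction N; simpl sumR. simpl; ring. rewrite IHN, S_INR. ring. Qed.

Lemma sumR_nonneg f N : (forall i, 0 <= f i) -> 0 <= sumR f N.
Proof. intros H; induction N; simpl; [lra|]. pose proof (H N); lra. Qed.

Lemma cnt_sum_le (Q : nat -> Prop) (P : nat -> nat -> Prop) N n :
  (forall k, ind (Q k) <= sumR (fun i => ind (P i k)) N) ->
  cs Q n <= sumR (fun i => cs (P i) n) N.
Proof.
  intros H. induction n.
  - simpl. rewrite sumR_const. lra.
  - rewrite cnt_S. 
    replace (sumR (fun i => cs (P i) (S n)) N) with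
      (sumR (fun i => cs (P i) n + ind (P i (S n))) N) by reflexivity.
    rewrite sumR_plus. pose proof (H (S n)). lra.
Qed.

Lemma cnt_sum_ge (Q : nat -> Prop) (P : nat -> nat -> Prop) N n :
  (forall k, sumR (fun i => ind (P i k)) N <= ind (Q k)) ->
  sumR (fun i => cs (P i) n) N <= cs Q n.
Proof.
  intros H. induction n.
  - simpl. rewrite sumR_const. lra.
  - rewrite cnt_S. 
    replace (sumR (fun i => cs (P i) (S n)) N) with
      (sumR (fun i => cs (P i) n + ind (P i (S n))) N) by reflexivity.
    rewrite sumR_plus. pose proof (H (S n)). lra.
Qed.

Lemma cnt_True n : cs (fun _ => True) n = INR n.
Proof. induction n. reflexivity. rewrite cnt_S, IHn, ind_true, S_INR; auto. Qed.

Lemma sum_ind_le1 (Q : nat -> Prop) N :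
  (forall i j, (i < N)%nat -> (j < N)%nat -> Q i -> Q j -> i = j) ->
  sumR (fun i => ind (Q i)) N <= 1.
Proof.
  induction N; intros H; simpl. lra.
  destruct (classic (Q N)) as [HQ|HQ].
  - assert (sumR (fun i => ind (Q i)) N = 0).
    { clear IHN. assert (forall M, (M <= N)%nat -> sumR (fun i => ind (Q i)) M = 0).
      { induction M; intros HM; simpl. auto. rewrite IHM by lia. rewrite ind_false. ring.
        intros HQM. specialize (H M N ltac:(lia) ltac:(lia) HQM HQ). lia. }
      apply H0; lia. }
    rewrite H0, ind_true; auto. lra.
  - rewrite ind_false; auto. rewrite Rplus_0_r. apply IHN. intros; apply H; auto; lia.
Qed.

Lemma sum_ind_ge1 (Q : nat -> Prop) N : (exists i, (i < N)%nat /\ Q i) ->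
  1 <= sumR (fun i => ind (Q i)) N.
Proof.
  intros [i [Hi HQ]]. induction N. lia. simpl.
  pose proof (sumR_nonneg (fun i => ind (Q i)) N (fun i => proj1 (ind_bounds (Q i)))).
  destruct (Nat.eq_dec i N) as [->|Hne].
  - rewrite ind_true; auto. lra.
  - pose proof (IHN ltac:(lia)). pose proof (ind_bounds (Q N)). lra.
Qed.

Lemma sum_ind_0 (Q : nat -> Prop) N : (forall i, (i < N)%nat -> ~ Q i) -> sumR (fun i => ind (Q i)) N = 0.
Proof. induction N; intros H; simpl. auto. rewrite IHN, ind_false; [ring| |]. apply H; lia. intros; apply H; lia. Qed.

Lemma cnt_shift1 (G : R -> Prop) n :
  cs (fun k => G (INR k + 1)) n + ind (G 1) = cs (fun k => G (INR k)) (S n).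
Proof.
  induction n.
  - simpl. replace (INR 1) with 1 by (simpl; auto). ring.
  - rewrite (cnt_S (fun k => G (INR k + 1))). rewrite (cnt_S (fun k => G (INR k)) (S n)).
    rewrite <- IHn. rewrite <- S_INR. ring.
Qed.

Lemma cnt_shift (g : R -> Prop) d n :
  Rabs (cs (fun k => g (INR k + INR d)) n - cs (fun k => g (INR k)) n) <= INR d.
Proof.
  induction d.
  - simpl. rewrite (cnt_ext _ (fun k => g (INR k))). rewrite Rminus_diag, Rabs_R0; lra.
    intros k. rewrite Rplus_0_r. tauto.
  - pose proof (cnt_shift1 (fun x => g (x + INR d)) n) as H1.
    cbv beta in H1. rewrite cnt_S in H1.
    rewrite (cnt_ext (fun k => g (INR k + INR (S d))) (fun k => g (INR k + 1 + INR d))).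
    2:{ intros k. rewrite S_INR. replace (INR k + 1 + INR d) with (INR k + (INR d + 1)) by ring. tauto. }
    pose proof (ind_bounds (g (1 + INR d))). pose proof (ind_bounds (g (INR (S n) + INR d))).
    rewrite S_INR. apply Rabs_le_between in IHd. apply Rabs_le_between. lra.
Qed.

Lemma cnt_shift_neg (g : R -> Prop) d n :
  Rabs (cs (fun k => g (INR k - INR d)) n - cs (fun k => g (INR k)) n) <= INR d.
Proof.
  pose proof (cnt_shift (fun x => g (x - INR d)) d n) as H. simpl in H.
  rewrite (cnt_ext (fun k => g (INR k + INR d - INR d)) (fun k => g (INR k))) in H.
  2:{ intros k. replace (INR k + INR d - INR d) with (INR k) by ring. tauto. }
  rewrite Rabs_minus_sym. exact H.
Qed.

Definition Irr (th : R) := forall (p : Z) (q : nat), (1 <= q)%nat -> INR q * th <> IZR p.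

Lemma nat_above' r : exists n : nat, r < INR n.
Proof. destruct (INR_archimed 1 r ltac:(lra)) as [n Hn]. exists n. lra. Qed.

Lemma Int_nonneg r : 0 <= r -> (0 <= Int_part r)%Z.
Proof.
  intros Hr. pose proof (Rplus_Int_part_frac_part r). pose proof (base_fp r) as [B1 B2].
  assert (Hm1 : -1 < IZR (Int_part r)) by lra. apply lt_IZR in Hm1. lia.
Qed.

Lemma floor_nat r : 0 <= r -> exists i : nat, INR i <= r < INR i + 1.
Proof.
  intros Hr. exists (Z.to_nat (Int_part r)).
  rewrite INR_IZR_INZ, Z2Nat.id by (apply Int_nonneg; auto).
  pose proof (Rplus_Int_part_frac_part r). pose proof (base_fp r) as [B1 B2]. lra.
Qed.

Lemma dirichlet th : Irr th -> forall eps, 0 < eps ->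
  exists q m d, (1 <= q)%nat /\ INR q * th = d + IZR m /\ 0 < Rabs d < eps.
Proof.
  intros Hirr eps Heps.
  destruct (nat_above' (/ eps)) as [N HN].
  assert (HNpos : 0 < INR N) by (pose proof (Rinv_0_lt_compat eps Heps); lra).
  set (fr := fun k : nat => frac_part (INR k * th)).
  set (f := fun k : nat => Z.to_nat (Int_part (INR N * fr k))).
  assert (Hfr : forall k, 0 <= fr k < 1) by (intros k; unfold fr; pose proof (base_fp (INR k * th)); lra).
  assert (Hfb : forall k, (f k < N)%nat).
  { intros k. unfold f. pose proof (Hfr k).
    pose proof (Rplus_Int_part_frac_part (INR N * fr k)). pose proof (base_fp (INR N * fr k)) as [B1 B2].
    assert (IZR (Int_part (INR N * fr k)) < INR N) by nra.
    assert (0 <= Int_part (INR N * fr k))%Z by (apply Int_nonneg; nra).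
    apply INR_lt. rewrite INR_IZR_INZ, Z2Nat.id; auto. }
  assert (Hdup : exists a b, a <> b /\ f a = f b).
  { apply NNPP. intros Hn.
    assert (Hnd : NoDup (map f (seq 0 (S N)))).
    { apply NoDup_map_NoDup_ForallPairs; [|apply seq_NoDup].
      intros a b _ _ Hab. destruct (Nat.eq_dec a b); auto. exfalso. apply Hn. exists a, b. auto. }
    apply NoDup_incl_length with (l' := seq 0 N) in Hnd.
    - rewrite length_map, !length_seq in Hnd. lia.
    - intros x Hx. apply in_map_iff in Hx. destruct Hx as [k [<- _]]. apply in_seq. pose proof (Hfb k). lia. }
  destruct Hdup as [a [b [Hab Hf]]].
  assert (Hij : exists i j, (i < j)%nat /\ f i = f j).
  { destruct (Nat.lt_gt_cases a b) as [[H|H] _]. auto. exists a, b; auto. exists b, a; auto. }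
  destruct Hij as [i [j [Hij Hfij]]].
  assert (Hclose : Rabs (fr j - fr i) < / INR N).
  { unfold f in Hfij. apply Z2Nat.inj in Hfij; try (apply Int_nonneg; pose proof (Hfr i); pose proof (Hfr j); nra).
    pose proof (Rplus_Int_part_frac_part (INR N * fr i)). pose proof (base_fp (INR N * fr i)).
    pose proof (Rplus_Int_part_frac_part (INR N * fr j)). pose proof (base_fp (INR N * fr j)).
    rewrite Hfij in *.
    assert (Rabs (INR N * fr j - INR N * fr i) < 1) by (apply Rabs_def1; lra).
    replace (INR N * fr j - INR N * fr i) with (INR N * (fr j - fr i)) in H3 by ring.
    rewrite Rabs_mult, Rabs_right in H3 by lra.
    apply (Rmult_lt_reg_l (INR N)); auto. rewrite Rinv_r; lra. }
  exists (j - i)%nat, (Int_part (INR j * th) - Int_part (INR i * th))%Z, (fr j - fr i).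
  assert (Heq : INR (j - i) * th = (fr j - fr i) + IZR (Int_part (INR j * th) - Int_part (INR i * th))).
  { rewrite minus_INR by lia. rewrite minus_IZR. unfold fr.
    pose proof (Rplus_Int_part_frac_part (INR j * th)). pose proof (Rplus_Int_part_frac_part (INR i * th)).
    lra. }
  split; [lia|]. split; auto. split.
  - apply Rabs_pos_lt. intros H0. rewrite H0, Rplus_0_l in Heq. eapply Hirr; [|exact Heq]. lia.
  - eapply Rlt_trans; eauto. rewrite <- (Rinv_inv eps). apply Rinv_lt_contravar; auto.
    apply Rmult_lt_0_compat; auto. apply Rinv_0_lt_compat; auto.
Qed.

Definition arcP th c u l := fun k : nat => frac_part (INR k * th + c - u) < l.

Lemma frac_decomp x : x = IZR (Int_part x) + frac_part x.
Proof. apply Rplus_Int_part_frac_part. Qed.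

Lemma arc_char x u d i : 0 < d -> (INR i + 1) * d <= 1 ->
  (frac_part (x - (u + INR i * d)) < d <-> INR i * d <= frac_part (x - u) < (INR i + 1) * d).
Proof.
  intros Hd Hi. pose proof (frac_decomp (x - u)) as E. pose proof (base_fp (x - u)) as [B1 B2].
  set (t := frac_part (x - u)) in *. pose proof (pos_INR i).
  assert (0 <= INR i * d) by nra.
  destruct (Rle_lt_dec (INR i * d) t) as [H1|H1].
  - assert (Hf : frac_part (x - (u + INR i * d)) = t - INR i * d).
    { symmetry. apply (Int_part_frac_part_spec _ (Int_part (x - u))). split; lra. lra. }
    rewrite Hf. split; intros; lra.
  - assert (Hf : frac_part (x - (u + INR i * d)) = t - INR i * d + 1).
    { symmetry. apply (Int_part_frac_part_spec _ (Int_part (x - u) - 1)). split; lra. rewrite minus_IZR. lra. }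
    rewrite Hf. split; intros; lra.
Qed.

Lemma arc_cov x u d i : 0 < d <= 1 ->
  INR i * d <= frac_part (x - u) < (INR i + 1) * d -> frac_part (x - (u + INR i * d)) < d.
Proof.
  intros Hd Hi. pose proof (frac_decomp (x - u)) as E. pose proof (base_fp (x - u)) as [B1 B2].
  set (t := frac_part (x - u)) in *.
  assert (0 <= INR i * d) by (pose proof (pos_INR i); nra).
  assert (frac_part (x - (u + INR i * d)) = t - INR i * d).
  { symmetry. apply (Int_part_frac_part_spec _ (Int_part (x - u))). split; lra. lra. }
  lra.
Qed.

Lemma translate th c q m d u i n : INR q * th = d + IZR m ->
  Rabs (cs (arcP th c (u + INR i * Rabs d) (Rabs d)) n - cs (arcP th c u (Rabs d)) n) <= INR (i * q).
Proof.
  intros Hq. set (g := fun x => frac_part (x * th + c - u) < Rabs d).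
  rewrite (cnt_ext (arcP th c u (Rabs d)) (fun k => g (INR k))) by (intros; unfold g, arcP; tauto).
  destruct (Rle_lt_dec 0 d) as [Hd|Hd].
  - rewrite (cnt_ext _ (fun k => g (INR k - INR (i * q)))).
    + apply cnt_shift_neg.
    + intros k. unfold arcP, g. rewrite Rabs_right by lra.
      replace (INR k * th + c - (u + INR i * d)) with
        ((INR k - INR (i * q)) * th + c - u + IZR (Z.of_nat i * m)).
      * rewrite frac_shift. tauto.
      * rewrite mult_IZR, <- INR_IZR_INZ, mult_INR.
        replace (INR i * d) with (INR i * (INR q * th - IZR m)) by (rewrite Hq; ring). ring.
  - rewrite (cnt_ext _ (fun k => g (INR k + INR (i * q)))).
    + apply cnt_shift.
    + intros k. unfold arcP, g. rewrite Rabs_left by lra.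
      replace (INR k * th + c - (u + INR i * - d)) with
        ((INR k + INR (i * q)) * th + c - u + IZR (- (Z.of_nat i * m))).
      * rewrite frac_shift. tauto.
      * rewrite opp_IZR, mult_IZR, <- INR_IZR_INZ, mult_INR.
        replace (INR i * - d) with (- (INR i * (INR q * th - IZR m))) by (rewrite Hq; ring). ring.
Qed.

Lemma INR_lt_le_S (i j : nat) : (i < j)%nat -> INR i + 1 <= INR j.
Proof. intros H. rewrite <- S_INR. apply le_INR. lia. Qed.

Lemma disjoint_arcs x u d N : 0 < d -> INR N * d <= 1 ->
  forall i j, (i < N)%nat -> (j < N)%nat ->
  frac_part (x - (u + INR i * d)) < d -> frac_part (x - (u + INR j * d)) < d -> i = j.
Proof.
  intros Hd HN i j Hi Hj H1 H2.
  assert (Hi' : (INR i + 1) * d <= 1) by (pose proof (INR_lt_le_S _ _ Hi); nra).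
  assert (Hj' : (INR j + 1) * d <= 1) by (pose proof (INR_lt_le_S _ _ Hj); nra).
  apply arc_char in H1; auto. apply arc_char in H2; auto.
  destruct (Nat.lt_total i j) as [H|[H|H]]; auto; exfalso.
  - pose proof (INR_lt_le_S _ _ H). nra.
  - pose proof (INR_lt_le_S _ _ H). nra.
Qed.

Lemma floor_arc x u d : 0 < d -> exists i : nat, INR i * d <= frac_part (x - u) < (INR i + 1) * d.
Proof.
  intros Hd. pose proof (base_fp (x - u)) as [B1 B2].
  destruct (floor_nat (frac_part (x - u) / d)) as [i Hi].
  { apply Rdiv_le_0_compat; lra. }
  exists i. destruct Hi as [H1 H2]. split.
  - apply (Rmult_le_compat_r d) in H1; [|lra]. unfold Rdiv in H1. rewrite Rmult_assoc, Rinv_l, Rmult_1_r in H1; lra.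
  - apply (Rmult_lt_compat_r d) in H2; [|lra]. unfold Rdiv in H2. rewrite Rmult_assoc, Rinv_l, Rmult_1_r in H2; lra.
Qed.

Section Arcs.
Variables (th c : R) (q : nat) (m : Z) (d : R) (P : nat).
Hypothesis Hq : INR q * th = d + IZR m.
Hypothesis Hd : 0 < Rabs d <= 1/2.
Hypothesis HP : INR P * Rabs d <= 1 < (INR P + 1) * Rabs d.

Lemma P_pos : (1 <= P)%nat.
Proof. destruct P. simpl in HP. lra. lia. Qed.

Lemma arcU u n : INR P * cs (arcP th c u (Rabs d)) n <= INR n + INR P * INR (P * q).
Proof.
  set (dl := Rabs d) in *.
  assert (S1 : sumR (fun i => cs (arcP th c (u + INR i * dl) dl) n) P <= INR n).
  { rewrite <- (cnt_True n). apply cnt_sum_ge. intros k. rewrite (ind_true True) by auto.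
    apply sum_ind_le1. intros i j Hi Hj. unfold arcP.
    apply (disjoint_arcs (INR k * th + c) u dl P); auto; lra. }
  assert (S2 : INR P * (cs (arcP th c u dl) n - INR (P * q)) <=
               sumR (fun i => cs (arcP th c (u + INR i * dl) dl) n) P).
  { rewrite <- sumR_const. apply sumR_le. intros i Hi.
    pose proof (translate th c q m d u i n Hq) as T. fold dl in T. apply Rabs_le_between in T.
    assert (INR (i * q) <= INR (P * q)) by (apply le_INR; apply Nat.mul_le_mono_r; lia). lra. }
  lra.
Qed.

Lemma arcL u n : INR n <= INR (S P) * (cs (arcP th c u (Rabs d)) n + INR (S P * q)).
Proof.
  set (dl := Rabs d) in *.
  assert (S1 : INR n <= sumR (fun i => cs (arcP th c (u + INR i * dl) dl) n) (S P)).
  { rewrite <- (cnt_True n). apply cnt_sum_le. intros k. rewrite (ind_true True) by auto.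
    apply sum_ind_ge1. destruct (floor_arc (INR k * th + c) u dl ltac:(lra)) as [i Hi].
    exists i. split.
    - assert (H0 : INR i * dl < (INR P + 1) * dl) by (pose proof (base_fp (INR k * th + c - u)); lra).
      apply Rmult_lt_reg_r in H0; [|lra]. rewrite <- S_INR in H0. apply INR_lt in H0. lia.
    - unfold arcP. apply arc_cov; auto. lra. }
  assert (S2 : sumR (fun i => cs (arcP th c (u + INR i * dl) dl) n) (S P) <=
      INR (S P) * (cs (arcP th c u dl) n + INR (S P * q))).
  { rewrite <- sumR_const. apply sumR_le. intros i Hi.
    pose proof (translate th c q m d u i n Hq) as T. fold dl in T. apply Rabs_le_between in T.
    assert (INR (i * q) <= INR (S P * q)) by (apply le_INR; apply Nat.mul_le_mono_r; lia). lra. }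
  lra.
Qed.
End Arcs.

Lemma arc_upper th c q m d P u l J n : INR q * th = d + IZR m -> 0 < Rabs d <= 1/2 ->
  INR P * Rabs d <= 1 < (INR P + 1) * Rabs d ->
  INR J * Rabs d <= l < (INR J + 1) * Rabs d ->
  cs (arcP th c u l) n <= INR (S J) * (INR n / INR P + INR (P * q)).
Proof.
  intros Hq Hd HP HJ. set (dl := Rabs d) in *.
  pose proof (P_pos d P Hd HP) as HP1.
  assert (HPr : 0 < INR P) by (apply lt_0_INR; lia).
  eapply Rle_trans.
  - apply (cnt_sum_le _ (fun i => arcP th c (u + INR i * dl) dl) (S J)).
    intros k. destruct (classic (arcP th c u l k)) as [Ha|Ha].
    + rewrite ind_true by auto. apply sum_ind_ge1.
      destruct (floor_arc (INR k * th + c) u dl ltac:(lra)) as [i Hi].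
      exists i. split.
      * unfold arcP in Ha. assert (H0 : INR i * dl < (INR J + 1) * dl) by lra.
        apply Rmult_lt_reg_r in H0; [|lra]. rewrite <- S_INR in H0. apply INR_lt in H0. lia.
      * unfold arcP. apply arc_cov; auto. lra.
    + rewrite ind_false by auto. apply sumR_nonneg. intros; apply ind_bounds.
  - rewrite <- sumR_const. apply sumR_le. intros i Hi.
    pose proof (arcU th c q m d P Hq Hd HP (u + INR i * dl) n) as U. fold dl in U.
    apply (Rmult_le_reg_l (INR P)); auto.
    replace (INR P * (INR n / INR P + INR (P * q))) with (INR n + INR P * INR (P * q)) by (field; lra).
    exact U.
Qed.

Lemma arc_lower th c q m d P u l J n : INR q * th = d + IZR m -> 0 < Rabs d <= 1/2 ->
  INR P * Rabs d <= 1 < (INR P + 1) * Rabs d ->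
  INR J * Rabs d <= l < (INR J + 1) * Rabs d -> l <= 1 ->
  INR J * (INR n / INR (S P) - INR (S P * q)) <= cs (arcP th c u l) n.
Proof.
  intros Hq Hd HP HJ Hl1. set (dl := Rabs d) in *.
  assert (HPr : 0 < INR (S P)) by (apply lt_0_INR; lia).
  eapply Rle_trans; [|apply (cnt_sum_ge _ (fun i => arcP th c (u + INR i * dl) dl) J)].
  - rewrite <- sumR_const. apply sumR_le. intros i Hi.
    pose proof (arcL th c q m d P Hq Hd HP (u + INR i * dl) n) as L. fold dl in L.
    apply (Rmult_le_reg_l (INR (S P))); auto.
    replace (INR (S P) * (INR n / INR (S P) - INR (S P * q))) with (INR n - INR (S P) * INR (S P * q)) by (field; lra).
    lra.
  - intros k. destruct (classic (arcP th c u l k)) as [Ha|Ha].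
    + rewrite ind_true by auto. apply sum_ind_le1. intros i j Hi Hj. unfold arcP.
      apply (disjoint_arcs (INR k * th + c) u dl J); auto; lra.
    + rewrite ind_false by auto. rewrite sum_ind_0; [lra|]. intros i Hi Hc. apply Ha.
      unfold arcP in *.
      assert (Hi' : (INR i + 1) * dl <= INR J * dl) by (pose proof (INR_lt_le_S _ _ Hi); nra).
      apply arc_char in Hc; [|lra|lra]. lra.
Qed.

Lemma arc_density th c u l : Irr th -> 0 <= l <= 1 ->
  forall eps, 0 < eps -> exists N, forall n, (N <= n)%nat ->
    Rabs (cs (arcP th c u l) n / INR n - l) < eps.
Proof.
  intros Hirr Hl eps Heps.
  destruct (dirichlet th Hirr (Rmin (1/2) (eps / 8)) ltac:(apply Rmin_glb_lt; lra)) as [q [m [d [Hq1 [Hq Hd]]]]].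
  assert (Hd1 : Rabs d <= 1/2) by (pose proof (Rmin_l (1/2) (eps/8)); lra).
  assert (Hd2 : Rabs d < eps / 8) by (pose proof (Rmin_r (1/2) (eps/8)); lra).
  set (dl := Rabs d) in *.
  assert (Hdl : 0 < dl) by lra.
  destruct (floor_nat (1 / dl)) as [P HP]. { apply Rdiv_le_0_compat; lra. }
  assert (HP' : INR P * dl <= 1 < (INR P + 1) * dl).
  { destruct HP as [H1 H2]. split.
    - apply (Rmult_le_compat_r dl) in H1; [|lra]. replace (1 / dl * dl) with 1 in H1 by (field; lra). lra.
    - apply (Rmult_lt_compat_r dl) in H2; [|lra]. replace (1 / dl * dl) with 1 in H2 by (field; lra). lra. }
  destruct (floor_nat (l / dl)) as [J HJ]. { apply Rdiv_le_0_compat; lra. }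
  assert (HJ' : INR J * dl <= l < (INR J + 1) * dl).
  { destruct HJ as [H1 H2]. split.
    - apply (Rmult_le_compat_r dl) in H1; [|lra]. replace (l / dl * dl) with l in H1 by (field; lra). lra.
    - apply (Rmult_lt_compat_r dl) in H2; [|lra]. replace (l / dl * dl) with l in H2 by (field; lra). lra. }
  pose proof (P_pos d P (conj Hdl Hd1) HP') as HP1.
  assert (HPr : 0 < INR P) by (apply lt_0_INR; lia).
  pose proof (pos_INR J) as HJ0.
  set (K := INR (S J) * INR (S P) * INR (S P * q)).
  assert (HK0 : 0 <= K) by (unfold K; pose proof (pos_INR (S J)); pose proof (pos_INR (S P)); pose proof (pos_INR (S P * q)); apply Rmult_le_pos; [apply Rmult_le_pos|]; lra).
  destruct (nat_above' (2 * K / eps)) as [N HN].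
  exists (S N). intros n Hn.
  assert (Hnr : INR N < INR n) by (apply lt_INR; lia).
  assert (Hn0 : 0 < INR n) by (pose proof (pos_INR N); lra).
  assert (HKn : 2 * K < eps * INR n).
  { apply (Rmult_lt_compat_l eps) in HN; auto. replace (eps * (2 * K / eps)) with (2 * K) in HN by (field; lra). nra. }
  pose proof (arc_upper th c q m d P u l J n Hq (conj Hdl Hd1) HP' HJ') as U.
  pose proof (arc_lower th c q m d P u l J n Hq (conj Hdl Hd1) HP' HJ' (proj2 Hl)) as L.
  fold dl in U, L.
  set (C := cs (arcP th c u l) n) in *.
  assert (HU1 : INR (S J) <= (l + 4 * dl) * INR P).
  { rewrite S_INR. apply (Rmult_le_reg_r dl); auto.
    assert ((l + 4 * dl) * (1 - dl) >= l + dl) by nra.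
    assert ((l + 4 * dl) * (INR P * dl) >= (l + 4 * dl) * (1 - dl)) by (apply Rle_ge, Rmult_le_compat_l; lra).
    nra. }
  assert (HU2 : INR (S J) * INR (P * q) <= K).
  { unfold K. assert (INR (P*q) <= INR (S P * q)) by (apply le_INR; apply Nat.mul_le_mono_r; lia).
    assert (1 <= INR (S P)) by (rewrite S_INR; pose proof (pos_INR P); lra).
    pose proof (pos_INR (S J)); pose proof (pos_INR (P*q)).
    apply Rle_trans with (INR (S J) * INR (S P * q)). apply Rmult_le_compat_l; lra.
    rewrite (Rmult_comm (INR (S J)) (INR (S P))), Rmult_assoc.
    set (x := INR (S J) * INR (S P * q)). assert (0 <= x) by (unfold x; apply Rmult_le_pos; apply pos_INR).
    nra. }
  assert (HCu : C < (l + eps) * INR n).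
  { assert (INR (S J) * (INR n / INR P) <= (l + 4 * dl) * INR n).
    { replace (INR (S J) * (INR n / INR P)) with (INR (S J) / INR P * INR n) by (field; lra).
      apply Rmult_le_compat_r; [lra|]. apply (Rmult_le_reg_r (INR P)); auto.
      replace (INR (S J) / INR P * INR P) with (INR (S J)) by (field; lra). lra. }
    nra. }
  assert (HL1 : (l - 2 * dl) * INR n <= INR J * (INR n / INR (S P))).
  { destruct (Rle_lt_dec (l - 2 * dl) 0) as [Hneg|Hpos].
    - assert (0 <= INR J * (INR n / INR (S P))).
      { apply Rmult_le_pos; auto. apply Rdiv_le_0_compat; [lra|]. apply lt_0_INR; lia. }
      nra.
    - assert (HSP : 0 < INR (S P)) by (apply lt_0_INR; lia).
      assert ((l - 2 * dl) * INR (S P) <= INR J).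
      { apply (Rmult_le_reg_r dl); auto. rewrite S_INR.
        assert ((l - 2 * dl) * ((INR P + 1) * dl) <= (l - 2 * dl) * (1 + dl)) by (apply Rmult_le_compat_l; lra).
        nra. }
      replace (INR J * (INR n / INR (S P))) with (INR J / INR (S P) * INR n) by (field; lra).
      apply Rmult_le_compat_r; [lra|]. apply (Rmult_le_reg_r (INR (S P))); auto.
      replace (INR J / INR (S P) * INR (S P)) with (INR J) by (field; lra). lra. }
  assert (HL2 : INR J * INR (S P * q) <= K).
  { unfold K. assert (INR J <= INR (S J)) by (rewrite S_INR; lra).
    assert (1 <= INR (S P)) by (rewrite S_INR; pose proof (pos_INR P); lra).
    pose proof (pos_INR (S P * q)).
    apply Rle_trans with (INR (S J) * INR (S P * q)). apply Rmult_le_compat_r; lra.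
    rewrite (Rmult_comm (INR (S J)) (INR (S P))), Rmult_assoc.
    set (x := INR (S J) * INR (S P * q)). assert (0 <= x) by (unfold x; apply Rmult_le_pos; apply pos_INR).
    nra. }
  assert (HCl : (l - eps) * INR n < C) by nra.
  apply Rabs_def1.
  - apply (Rmult_lt_reg_r (INR n)); auto. unfold Rminus. rewrite Rmult_plus_distr_r.
    replace (C / INR n * INR n) with C by (field; lra). nra.
  - apply (Rmult_lt_reg_r (INR n)); auto. unfold Rminus. rewrite Rmult_plus_distr_r.
    replace (C / INR n * INR n) with C by (field; lra). nra.
Qed.

Lemma sandwich th c (y : nat -> R) (E : nat -> Prop) u l : Irr th -> 0 <= l <= 1 ->
  (forall eta, 0 < eta -> exists K, forall k, (K <= k)%nat -> Rabs (y k - (INR k * th + c)) < eta) ->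
  (forall eta, 0 < eta -> exists K, forall k, (K <= k)%nat ->
     (frac_part (y k - u - eta) < l - 2 * eta -> E k) /\
     (E k -> frac_part (y k - u + eta) < l + 2 * eta)) ->
  forall eps, 0 < eps -> exists N, forall n, (N <= n)%nat -> Rabs (cs E n / INR n - l) < eps.
Proof.
  intros Hirr Hl Hyz HE eps Heps.
  set (eta := eps / 16).
  assert (Heta : 0 < eta) by (unfold eta; lra).
  destruct (Hyz eta Heta) as [K1 HK1].
  destruct (HE eta Heta) as [K2 HK2].
  set (K0 := (K1 + K2)%nat).
  set (lm := Rmax 0 (l - 4 * eta)). set (lP := Rmin 1 (l + 4 * eta)).
  assert (Hlm : 0 <= lm <= 1 /\ l - 4 * eta <= lm).
  { unfold lm. split; [split|]. apply Rmax_l. apply Rmax_lub; lra. apply Rmax_r. }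
  assert (HlP : 0 <= lP <= 1 /\ lP <= l + 4 * eta).
  { unfold lP. split; [split|]. apply Rmin_glb; lra. apply Rmin_l. apply Rmin_r. }
  assert (Hlow : forall k, (K0 <= k)%nat -> arcP th c (u + 2 * eta) lm k -> E k).
  { intros k Hk Ha. unfold arcP in Ha.
    specialize (HK1 k ltac:(unfold K0 in *; lia)). specialize (HK2 k ltac:(unfold K0 in *; lia)).
    apply HK2. apply Rabs_def2 in HK1.
    pose proof (base_fp (INR k * th + c - (u + 2 * eta))) as [B1 B2].
    assert (Hlm' : frac_part (INR k * th + c - (u + 2 * eta)) < l - 4 * eta).
    { destruct (Rle_lt_dec (l - 4 * eta) 0) as [H0|H0].
      - unfold lm in Ha. rewrite Rmax_left in Ha by lra. lra.
      - unfold lm in Ha. rewrite Rmax_right in Ha by lra. lra. }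
    replace (y k - u - eta) with ((INR k * th + c - (u + 2 * eta)) + (eta + (y k - (INR k * th + c)))) by ring.
    pose proof (frac_add_le (INR k * th + c - (u + 2 * eta)) (eta + (y k - (INR k * th + c))) ltac:(lra)).
    lra. }
  assert (Hup : forall k, (K0 <= k)%nat -> E k -> arcP th c (u - 2 * eta) lP k).
  { intros k Hk Ha. unfold arcP.
    specialize (HK1 k ltac:(unfold K0 in *; lia)). specialize (HK2 k ltac:(unfold K0 in *; lia)).
    apply HK2 in Ha. apply Rabs_def2 in HK1.
    replace (INR k * th + c - (u - 2 * eta)) with ((y k - u + eta) + (eta - (y k - (INR k * th + c)))) by ring.
    pose proof (frac_add_le (y k - u + eta) (eta - (y k - (INR k * th + c))) ltac:(lra)).
    pose proof (base_fp ((y k - u + eta) + (eta - (y k - (INR k * th + c))))) as [B1 B2].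
    unfold lP. apply Rmin_glb_lt; lra. }
  destruct (arc_density th c (u + 2 * eta) lm Hirr (proj1 Hlm) (eps / 4) ltac:(lra)) as [N1 HN1].
  destruct (arc_density th c (u - 2 * eta) lP Hirr (proj1 HlP) (eps / 4) ltac:(lra)) as [N2 HN2].
  destruct (nat_above' (4 * INR K0 / eps)) as [N3 HN3].
  exists (S (N1 + N2 + N3)). intros n Hn.
  specialize (HN1 n ltac:(lia)). specialize (HN2 n ltac:(lia)).
  assert (Hnr : INR N3 < INR n) by (apply lt_INR; lia).
  assert (Hn0 : 0 < INR n) by (pose proof (pos_INR N3); lra).
  assert (HKn : INR K0 / INR n < eps / 4).
  { apply (Rmult_lt_reg_r (INR n)); auto. replace (INR K0 / INR n * INR n) with (INR K0) by (field; lra).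
    apply (Rmult_lt_compat_l eps) in HN3; auto. replace (eps * (4 * INR K0 / eps)) with (4 * INR K0) in HN3 by (field; lra).
    nra. }
  pose proof (cnt_mono_ev _ _ K0 n Hlow) as C1.
  pose proof (cnt_mono_ev _ _ K0 n Hup) as C2.
  apply Rabs_def2 in HN1. apply Rabs_def2 in HN2.
  assert (D1 : cs (arcP th c (u + 2 * eta) lm) n / INR n <= cs E n / INR n + INR K0 / INR n).
  { unfold Rdiv. rewrite <- Rmult_plus_distr_r. apply Rmult_le_compat_r; [|lra]. left; apply Rinv_0_lt_compat; lra. }
  assert (D2 : cs E n / INR n <= cs (arcP th c (u - 2 * eta) lP) n / INR n + INR K0 / INR n).
  { unfold Rdiv. rewrite <- Rmult_plus_distr_r. apply Rmult_le_compat_r; [|lra]. left; apply Rinv_0_lt_compat; lra. }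
  apply Rabs_def1; unfold eta in *; lra.
Qed.

Lemma frakF_cont : continuity frakF.
Proof. unfold frakF, Rpower. reg. Qed.

Lemma Rpower_phi_le1 x : 0 <= x -> Rpower phi (- x) <= 1.
Proof.
  intros Hx. unfold Rpower. rewrite <- exp_0. apply exp_le_mono. pose proof lp_pos. unfold lp in *. nra.
Qed.

Lemma frakF_split x : 0 <= x -> exists e, Rabs e <= 1 /\ frakF x = rho0 * (exp (x * lp) + e).
Proof.
  intros Hx. exists (Rpower phi (- x) * cos (PI * x) * Rpower phi (-2)). split.
  - pose proof (Rpower_phi_le1 x Hx).
    assert (Rpower phi (-2) <= 1) by (replace (-2) with (-(2)) by ring; apply Rpower_phi_le1; lra).
    assert (0 < Rpower phi (-x)) by (unfold Rpower; apply exp_pos).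
    assert (0 < Rpower phi (-2)) by (unfold Rpower; apply exp_pos).
    pose proof (COS_bound (PI * x)).
    rewrite !Rabs_mult, (Rabs_right (Rpower phi (-x))), (Rabs_right (Rpower phi (-2))) by lra.
    assert (Rabs (cos (PI * x)) <= 1) by (apply Rabs_le; lra).
    pose proof (Rabs_pos (cos (PI * x))).
    assert (Rpower phi (- x) * Rabs (cos (PI * x)) <= 1) by nra. nra.
  - unfold frakF, rho0. reflexivity.
Qed.

Lemma frakF_1 : frakF 1 = 1.
Proof.
  unfold frakF. pose proof phi_bounds. pose proof phi_sq.
  rewrite Rpower_1 by lra. rewrite Rpower_Ropp, Rpower_1 by lra.
  replace (-2) with (- INR 2) by (simpl; ring). rewrite Rpower_Ropp, Rpower_pow by lra.
  rewrite Rmult_1_r, cos_PI.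
  assert (Hs : sqrt 5 = 2 * phi - 1) by (unfold phi; lra).
  rewrite Hs. field_simplify; try lra. 
  assert (phi ^ 4 = 3 * phi + 2) by (simpl; nra).
  assert (phi ^ 3 = 2 * phi + 1) by (simpl; nra).
  rewrite H1, H2. replace (phi ^ 2) with (phi + 1) by (simpl; nra). field. lra.
Qed.

Lemma frakF_exists y : 1 <= y -> exists x, 1 <= x /\ frakF x = y.
Proof.
  intros Hy. pose proof rho0_pos. pose proof lp_pos.
  set (X := 2 + ln (y / rho0 + 1) / lp).
  assert (HX0 : 0 <= ln (y / rho0 + 1)).
  { rewrite <- ln_1. apply ln_le_mono. lra. assert (0 <= y / rho0) by (apply Rdiv_le_0_compat; lra). lra. }
  assert (HX : 1 <= X) by (unfold X; assert (0 <= ln (y / rho0 + 1) / lp) by (apply Rdiv_le_0_compat; lra); lra).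
  assert (HFX : y <= frakF X).
  { destruct (frakF_split X ltac:(lra)) as [e [He HF]]. rewrite HF.
    assert (exp (X * lp) >= y / rho0 + 1 + 1).
    { unfold X. replace ((2 + ln (y / rho0 + 1) / lp) * lp) with (lp + lp + ln (y / rho0 + 1)) by (field; lra).
      rewrite !exp_plus, exp_ln. unfold lp. rewrite exp_ln by (pose proof phi_bounds; lra).
      pose proof phi_bounds. assert (0 <= y / rho0) by (apply Rdiv_le_0_compat; lra). assert (phi * phi >= 2) by nra. nra.
      assert (0 <= y / rho0) by (apply Rdiv_le_0_compat; lra). lra. }
    apply Rabs_le_between in He.
    assert (y = rho0 * (y / rho0)) by (field; lra). nra. }
  destruct (IVT_cor (fun x => frakF x - y) 1 X) as [z [Hz1 Hz2]].
  - apply continuity_minus. apply frakF_cont. apply continuity_const. intros a b; auto.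
  - auto.
  - rewrite frakF_1. apply Rmult_le_0_r; lra.
  - exists z. split; lra.
Qed.

Lemma frakFinv_spec y : 1 <= y -> 1 <= frakFinv y /\ frakF (frakFinv y) = y.
Proof.
  intros Hy. unfold frakFinv. apply (epsilon_spec (inhabits 0) (fun x => 1 <= x /\ frakF x = y)).
  apply frakF_exists; auto.
Qed.

Lemma ln_upper t : 0 < t -> ln t <= t - 1.
Proof. intros Ht. pose proof (exp_ineq1_le (ln t)). rewrite exp_ln in H; auto. lra. Qed.

Lemma ln_lower t : 0 < t -> 1 - / t <= ln t.
Proof.
  intros Ht. pose proof (ln_upper (/ t) ltac:(apply Rinv_0_lt_compat; auto)).
  rewrite ln_Rinv in H; auto. lra.
Qed.

Lemma frakFinv_asym eta : 0 < eta -> exists Y0, forall y, Y0 <= y ->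
  Rabs (frakFinv y - ln (y / rho0) / lp) < eta.
Proof.
  intros Heta. pose proof rho0_pos. pose proof lp_pos.
  exists (1 + rho0 * (3 + / (eta * lp))). intros y Hy.
  assert (Hel : 0 < / (eta * lp)) by (apply Rinv_0_lt_compat; nra).
  assert (Hy1 : 1 <= y) by nra.
  destruct (frakFinv_spec y Hy1) as [Hx1 Hx2].
  set (x := frakFinv y) in *.
  destruct (frakF_split x ltac:(lra)) as [e [He HF]].
  rewrite Hx2 in HF. apply Rabs_le_between in He.
  set (g := exp (x * lp)) in *.
  assert (Hg : g = y / rho0 - e) by (rewrite HF; field; lra).
  assert (Hyr : y / rho0 >= 3 + / (eta * lp)).
  { apply Rle_ge. apply (Rmult_le_reg_l rho0); auto. replace (rho0 * (y / rho0)) with y by (field; lra). lra. }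
  assert (Hg1 : g - 1 > / (eta * lp)) by lra.
  assert (Hgpos : 0 < g - 1) by lra.
  assert (Hx : x = ln g / lp) by (unfold g; rewrite ln_exp; field; lra).
  rewrite Hx.
  replace (ln g / lp - ln (y / rho0) / lp) with (- (ln ((g + e) / g)) / lp).
  2:{ rewrite Hg. replace (y / rho0 - e + e) with (y / rho0) by ring.
      rewrite ln_div; [field; lra| |lra]. apply Rdiv_lt_0_compat; lra. }
  assert (Hgt : 0 < (g + e) / g) by (apply Rdiv_lt_0_compat; lra).
  pose proof (ln_upper _ Hgt) as U. pose proof (ln_lower _ Hgt) as L.
  assert (U' : ln ((g + e) / g) <= / (g - 1)).
  { assert ((g + e) / g - 1 = e / g) by (field; lra). 
    assert (e / g <= / (g - 1)).
    { apply (Rmult_le_reg_r (g * (g - 1))). nra.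
      replace (e / g * (g * (g - 1))) with (e * (g - 1)) by (field; lra).
      replace (/ (g - 1) * (g * (g - 1))) with g by (field; lra). nra. }
    lra. }
  assert (L' : - / (g - 1) <= ln ((g + e) / g)).
  { assert (1 - / ((g + e) / g) = e / (g + e)) by (field; lra).
    assert (- / (g - 1) <= e / (g + e)).
    { apply (Rmult_le_reg_r ((g + e) * (g - 1))). nra.
      replace (e / (g + e) * ((g + e) * (g - 1))) with (e * (g - 1)) by (field; lra).
      replace (- / (g - 1) * ((g + e) * (g - 1))) with (- (g + e)) by (field; lra). nra. }
    lra. }
  assert (Hinv : / (g - 1) < eta * lp).
  { rewrite <- (Rinv_inv (eta * lp)). apply Rinv_lt_contravar; auto. nra. }
  unfold Rdiv. rewrite Rabs_mult, Rabs_Ropp, Rabs_inv, (Rabs_right lp) by lra.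
  apply (Rmult_lt_reg_r lp); auto. rewrite Rmult_assoc, Rinv_l, Rmult_1_r by lra.
  apply Rabs_def1; lra.
Qed.

Lemma lim_of_eps (u : nat -> R) (l : R) :
  (forall eps, 0 < eps -> exists N, forall n, (N <= n)%nat -> Rabs (u n - l) < eps) -> is_lim_seq u l.
Proof.
  intros H. apply is_lim_seq_spec. intros eps. destruct (H eps (cond_pos eps)) as [N HN]. exists N. auto.
Qed.

Lemma eps_of_lim (u : nat -> R) (l : R) : is_lim_seq u l ->
  forall eps, 0 < eps -> exists N, forall n, (N <= n)%nat -> Rabs (u n - l) < eps.
Proof.
  intros H eps Heps. pose proof (proj2 (is_lim_seq_spec u l) H) as H'. destruct (H' (mkposreal eps Heps)) as [N HN]. exists N. auto.
Qed.

Lemma Irr_of th : (~ exists q : Q, th = Q2R q) -> Irr th.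
Proof.
  intros H p q Hq E. apply H. destruct q as [|q']. lia.
  exists (Qmake p (Pos.of_succ_nat q')). unfold Q2R. simpl Qnum. simpl Qden.
  simpl. rewrite Zpos_P_of_succ_nat. rewrite <- Nat2Z.inj_succ, <- INR_IZR_INZ.
  assert (0 < INR (S q')) by (apply lt_0_INR; lia).
  apply (Rmult_eq_reg_l (INR (S q'))); [|lra]. rewrite E. field. lra.
Qed.

Lemma Dv_nonneg w : 0 <= Dv w.
Proof.
  induction w as [|x w IH]; simpl. lra.
  assert (0 < omega) by (unfold omega; apply Rinv_0_lt_compat; pose proof phi_bounds; lra).
  destruct x; nra.
Qed.

Lemma Dv_ge1 w : hdf w = true -> 1 <= Dv w.
Proof.
  destruct w as [|x w]; simpl; try discriminate. intros ->. pose proof (Dv_nonneg w).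
  assert (0 < omega) by (unfold omega; apply Rinv_0_lt_compat; pose proof phi_bounds; lra). nra.
Qed.

Lemma ln_ratio_small r : Rabs (r - 1) < 1/2 -> Rabs (ln r) <= 2 * Rabs (r - 1).
Proof.
  intros H. apply Rabs_def2 in H. assert (0 < r) by lra.
  pose proof (ln_upper r H0). pose proof (ln_lower r H0).
  assert (1 - / r = (r - 1) / r) by (field; lra).
  apply Rabs_le. destruct (Rle_lt_dec 1 r).
  - rewrite Rabs_right by lra. split; [|lra].
    assert (0 <= (r - 1) / r) by (apply Rdiv_le_0_compat; lra). lra.
  - rewrite Rabs_left by lra. split; [|lra].
    assert ((r - 1) / r >= 2 * (r - 1)).
    { apply Rle_ge. apply (Rmult_le_reg_r r); auto. replace ((r - 1) / r * r) with (r - 1) by (field; lra). nra. }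
    lra.
Qed.


Theorem corollary4p7 (K : nat -> nat) (a b : R) :
  0 < a -> 0 < b ->
  (forall n, (1 <= n)%nat -> (0 < K n)%nat) ->
  is_lim_seq (fun n => INR (K n) / (a * b ^ n)) 1 ->
  (~ exists q : Q, logphi b = Q2R q) ->
  equidistributed (fun n => frakFinv (INR (K n))) /\
  (forall (s : nat) (bb : list bool), (2 <= s)%nat -> inFs s bb ->
     is_lim_seq
       (fun n => cnt (fun k => LB s (K k) bb) n / INR n)
       (logphi (dotHat (tilde s bb) / dotHat bb))).
Proof.
  intros Ha Hb HK Hlim Hq.
  pose proof lp_pos as Hlp. pose proof rho0_pos as Hr0.
  set (th := logphi b).
  assert (Hirr : Irr th) by (apply Irr_of; auto).
  pose proof (eps_of_lim _ _ Hlim) as Hr.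
  set (r := fun n => INR (K n) / (a * b ^ n)) in *.
  assert (Hbn : forall n, 0 < a * b ^ n) by (intros n; apply Rmult_lt_0_compat; auto; apply pow_lt; auto).
  assert (HKr : forall n, INR (K n) = r n * (a * b ^ n)).
  { intros n. unfold r, Rdiv. rewrite Rmult_assoc, Rinv_l, Rmult_1_r; [reflexivity|]. pose proof (Hbn n). lra. }
  assert (Hb1 : 1 < b).
  { destruct (Rlt_le_dec 1 b) as [H|H]; auto. exfalso.
    destruct (Req_dec b 1) as [E|E].
    - apply Hq. exists 0%Q. unfold th, logphi in *. rewrite E, ln_1. unfold Q2R. simpl. field.
      unfold lp in Hlp. lra.
    - destruct (pow_lt_1_zero b ltac:(rewrite Rabs_right; lra) (1 / (2 * a)) ltac:(apply Rdiv_lt_0_compat; lra)) as [N1 HN1].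
      destruct (Hr (1/2) ltac:(lra)) as [N2 HN2].
      set (n := S (N1 + N2)).
      specialize (HN1 n ltac:(unfold n; lia)). specialize (HN2 n ltac:(unfold n; lia)).
      rewrite Rabs_right in HN1 by (apply Rle_ge, pow_le; lra).
      apply Rabs_def2 in HN2.
      pose proof (HK n ltac:(unfold n; lia)) as HKn.
      assert (1 <= INR (K n)) by (apply (le_INR 1); lia).
      rewrite HKr in H0. pose proof (Hbn n).
      assert (a * b ^ n < 1/2).
      { apply (Rmult_lt_compat_l a) in HN1; auto. replace (a * (1 / (2 * a))) with (1/2) in HN1 by (field; lra). lra. }
      nra. }
  assert (Kinf : forall M, exists N, forall n, (N <= n)%nat -> M <= INR (K n)).
  { intros M. destruct (Hr (1/2) ltac:(lra)) as [N2 HN2].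
    destruct (Pow_x_infinity b ltac:(rewrite Rabs_right; lra) (2 * Rabs M / a + 1)) as [N3 HN3].
    exists (N2 + N3)%nat. intros n Hn.
    specialize (HN2 n ltac:(lia)). apply Rabs_def2 in HN2.
    specialize (HN3 N3 (Nat.le_refl _)). rewrite Rabs_right in HN3 by (apply Rle_ge, pow_le; lra).
    pose proof (Rle_pow b N3 n ltac:(lra) ltac:(lia)).
    rewrite HKr. pose proof (Rle_abs M).
    assert (a * b ^ n >= 2 * Rabs M + a).
    { apply Rle_ge. apply Rle_trans with (a * b ^ N3); [|apply Rmult_le_compat_l; lra].
      apply Rge_le in HN3. apply (Rmult_le_compat_l a) in HN3; [|lra].
      replace (a * (2 * Rabs M / a + 1)) with (2 * Rabs M + a) in HN3 by (field; lra). lra. }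
    assert (r n * (a * b ^ n) >= (1/2) * (a * b ^ n)) by (apply Rle_ge, Rmult_le_compat_r; [pose proof (Hbn n)|]; lra). lra. }
  set (c0 := ln (a / rho0) / lp).
  assert (Hyz : forall eta, 0 < eta -> exists N, forall n, (N <= n)%nat ->
     Rabs (Y (K n) - (INR n * th + c0)) < eta).
  { intros eta Heta.
    destruct (Hr (Rmin (1/2) (eta * lp / 2)) ltac:(apply Rmin_glb_lt; nra)) as [N HN].
    exists (S N). intros n Hn. specialize (HN n ltac:(lia)).
    pose proof (Rmin_l (1/2) (eta * lp / 2)). pose proof (Rmin_r (1/2) (eta * lp / 2)).
    pose proof (ln_ratio_small (r n) ltac:(lra)) as Hl.
    assert (Hrpos : 0 < r n) by (apply Rabs_def2 in HN; lra).
    assert (E : Y (K n) - (INR n * th + c0) = ln (r n) / lp).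
    { unfold Y, th, logphi, c0. fold lp.
      replace (INR (K n) / rho0) with (r n * ((a / rho0) * b ^ n)) by (rewrite HKr; field; lra).
      rewrite ln_mult, ln_mult, ln_pow; auto; try apply Rdiv_lt_0_compat; auto; try apply pow_lt; auto.
      field. lra. apply Rmult_lt_0_compat. apply Rdiv_lt_0_compat; auto. apply pow_lt; auto. }
    rewrite E. unfold Rdiv. rewrite Rabs_mult, Rabs_inv, (Rabs_right lp) by lra.
    apply (Rmult_lt_reg_r lp); auto. rewrite Rmult_assoc, Rinv_l, Rmult_1_r by lra. lra. }
  split.
  -
    intros beta Hbeta. apply lim_of_eps. intros eps Heps.
    destruct (sandwich th (c0 + th) (fun k => frakFinv (INR (K (S k))))
       (fun k => frac_part (frakFinv (INR (K (S k)))) <= beta) 0 beta Hirr Hbeta) with (eps := eps)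
      as [N HN]; auto.
    + intros eta Heta.
      destruct (frakFinv_asym (eta / 2) ltac:(lra)) as [Y0 HY0].
      destruct (Kinf Y0) as [N1 HN1]. destruct (Hyz (eta / 2) ltac:(lra)) as [N2 HN2].
      exists (N1 + N2)%nat. intros k Hk.
      specialize (HY0 _ (HN1 (S k) ltac:(lia))). specialize (HN2 (S k) ltac:(lia)).
      unfold Y in HN2. rewrite S_INR in HN2.
      replace (frakFinv (INR (K (S k))) - (INR k * th + (c0 + th))) with
        ((frakFinv (INR (K (S k))) - ln (INR (K (S k)) / rho0) / lp) +
         (ln (INR (K (S k)) / rho0) / lp - ((INR k + 1) * th + c0))) by ring.
      eapply Rle_lt_trans. apply Rabs_triang. lra.
    + intros eta Heta. exists 0%nat. intros k _. split.
      * intros H. replace (frakFinv (INR (K (S k)))) with ((frakFinv (INR (K (S k))) - 0 - eta) + eta) by ring.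
        pose proof (frac_add_le (frakFinv (INR (K (S k))) - 0 - eta) eta ltac:(lra)). lra.
      * intros H. replace (frakFinv (INR (K (S k))) - 0 + eta) with (frakFinv (INR (K (S k))) + eta) by ring.
        pose proof (frac_add_le (frakFinv (INR (K (S k)))) eta ltac:(lra)). lra.
    + exists N. intros n Hn. rewrite cnt_cs. apply HN; auto.
  -
    intros s bb Hs Hin.
    pose proof (inFs_blk s bb ltac:(lia) Hin) as Hblk. pose proof Hblk as [B1 [B2 B3]].
    destruct (tilde_prop s bb Hs Hin) as [Htl HtV].
    set (tb := tilde s bb) in *.
    set (Db := Dv bb). set (Dt := Dv tb).
    assert (Hbw : forall j, Rabs (INR (V bb j) - A s j * Db) <= INR s).
    { intros j. pose proof (binet_word bb j). rewrite B2 in H. exact H. }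
    assert (Htw : forall j, Rabs (INR (V tb j) - A s j * Dt) <= INR s).
    { intros j. pose proof (binet_word tb j). rewrite Htl in H. exact H. }
    assert (HDb1 : 1 <= Db) by (apply Dv_ge1; auto).
    assert (HVle : forall j, (V bb j <= V tb j)%nat) by (intros j; rewrite HtV; lia).
    assert (HDbt : Db <= Dt).
    { cut (Db - Dt <= 0). lra. apply (unbounded s _ (2 * INR s)). intros j.
      pose proof (Hbw j) as H1. pose proof (Htw j) as H2. apply Rabs_le_between in H1, H2.
      pose proof (le_INR _ _ (HVle j)). lra. }
    assert (HDtp : Dt <= phi).
    { cut (Dt - phi <= 0). lra. apply (unbounded s _ (INR s + 1)). intros j.
      pose proof (Htw j) as H2. apply Rabs_le_between in H2.
      pose proof (top_bound s bb j Hblk) as T. rewrite <- HtV in T. apply le_INR in T.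
      pose proof (binet_err (S (s + j))) as BE. apply Rabs_def2 in BE.
      assert (phi ^ S (S (s + j)) / sqrt 5 = phi * A s j).
      { unfold A. replace (S (S (s + j))) with (S (s + j + 1)) by lia. simpl. unfold Rdiv. ring. }
      lra. }
    set (l := ln Dt / lp - ln Db / lp).
    assert (Hl : 0 <= l <= 1).
    { unfold l. assert (ln Db <= ln Dt) by (apply ln_le_mono; lra).
      assert (0 <= ln Db) by (rewrite <- ln_1; apply ln_le_mono; lra).
      assert (ln Dt <= lp) by (unfold lp; apply ln_le_mono; lra).
      split.
      - unfold Rdiv. rewrite <- Rmult_minus_distr_r. apply Rmult_le_pos; [lra|]. left; apply Rinv_0_lt_compat; lra.
      - apply (Rmult_le_reg_r lp); auto. unfold Rdiv. rewrite Rmult_minus_distr_r, !Rmult_assoc, Rinv_l, !Rmult_1_r by lra.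
        lra. }
    assert (Hchar : forall m, LB s m bb <-> exists j, (V bb j <= m < V tb j)%nat).
    { intros m. rewrite (LB_char s bb m ltac:(lia) Hblk). split; intros [j Hj]; exists j; rewrite HtV in *; lia. }
    pose proof (core s Db Dt (V bb) (V tb) (fun m => LB s m bb) HDb1 ltac:(lra) Hbw Htw Hchar) as Hcore.
    assert (Htarget : logphi (dotHat tb / dotHat bb) = l).
    { rewrite !dotHat_Dv. fold Db Dt. unfold logphi, l. fold lp. rewrite ln_div by lra. field. lra. }
    rewrite Htarget. apply lim_of_eps. intros eps Heps.
    destruct (sandwich th (c0 + th) (fun k => Y (K (S k)))
       (fun k => LB s (K (S k)) bb) (ln Db / lp) l Hirr Hl) with (eps := eps)
      as [N HN]; auto.
    + intros eta Heta. destruct (Hyz eta Heta) as [N1 HN1]. exists N1. intros k Hk.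
      specialize (HN1 (S k) ltac:(lia)). rewrite S_INR in HN1.
      replace (INR k * th + (c0 + th)) with ((INR k + 1) * th + c0) by ring. exact HN1.
    + intros eta Heta. destruct (Hcore eta Heta) as [m0 Hm0].
      destruct (Kinf (INR m0)) as [N1 HN1]. exists N1. intros k Hk.
      apply Hm0. apply INR_le. apply HN1. lia.
    + exists N. intros n Hn. rewrite cnt_cs. apply HN; auto.
Qed.
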